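(* Let $n\ge 3$ be an odd integer and $(\mathcal{C},\Sigma)$ a tensor $n$-angulated category, with Grothendieck ring $K_0(\mathcal{C})$ (multiplication $[A][B]=[A\otimes B]$). Then the maps $\mathcal{A}\mapsto\operatorname{Im}K_0(\mathcal{A})$ and $H\mapsto\mathcal{A}_H$ give mutually inverse bijections (a) between the set of $n$-angulated tensor ideals of $\mathcal{C}$ that are both complete and dense and the set of ideals of the ring $K_0(\mathcal{C})$; and (b) between the set of $n$-angulated tensor prime ideals of $\mathcal{C}$ that are both complete and dense and the set of prime ideals of $K_0(\mathcal{C})$. Here $\mathcal{A}_H$ is the full subcategory of $\mathcal{C}$ consisting of the objects $A$ with $[A]\in H$ (with $n$-angles the $n$-angles of $\mathcal{C}$ all of whose objects lie in $\mathcal{A}_H$).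
   Context: All categories are small. Fix an integer $n\ge 3$. Let $\mathcal{C}$ be an additive category with an automorphism $\Sigma$. An $n$-$\Sigma$-sequence in $\mathcal{C}$ is a diagram $A_1\xrightarrow{\alpha_1}A_2\xrightarrow{\alpha_2}\cdots\xrightarrow{\alpha_{n-1}}A_n\xrightarrow{\alpha_n}\Sigma A_1$. Its left rotation is $A_2\xrightarrow{\alpha_2}\cdots\xrightarrow{\alpha_n}\Sigma A_1\xrightarrow{(-1)^n\Sigma\alpha_1}\Sigma A_2$. A morphism from $(A_\bullet,\alpha)$ to $(B_\bullet,\beta)$ is a tuple $(\varphi_1,\dots,\varphi_n)$, $\varphi_i:A_i\to B_i$, with $\beta_i\varphi_i=\varphi_{i+1}\alpha_i$ for $1\le i\le n-1$ and $\beta_n\varphi_n=(\Sigma\varphi_1)\alpha_n$; it is an isomorphism if all $\varphi_i$ are isomorphisms. Direct sums of sequences are taken termwise. $(\mathcal{C},\Sigma)$ is $n$-angulated if it is equipped with a collection $\mathscr N$ of $n$-$\Sigma$-sequences, called $n$-angles, such that: (N1)(a) $\mathscr N$ is closed under direct sums, direct summands and isomorphisms of $n$-$\Sigma$-sequences; (b) for every object $A$, the trivial sequence $A\xrightarrow{1}A\to0\to\cdots\to0\to\Sigma A$ is in $\mathscr N$; (c) every morphism $A_1\to A_2$ is the first morphism of some $n$-angle; (N2) an $n$-$\Sigma$-sequence is in $\mathscr N$ iff its left rotation is; (N3) given $n$-angles $(A_\bullet,\alpha),(B_\bullet,\beta)$ and $\varphi_1:A_1\to B_1$, $\varphi_2:A_2\to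 B_2$ with $\beta_1\varphi_1=\varphi_2\alpha_1$, there exist $\varphi_3,\dots,\varphi_n$ making $(\varphi_1,\dots,\varphi_n)$ a morphism; (N4) in (N3) the $\varphi_i$ can be chosen so that the mapping cone $A_2\oplus B_1\to A_3\oplus B_2\to\cdots\to\Sigma A_1\oplus B_n\to\Sigma A_2\oplus\Sigma B_1$, with maps $\left[\begin{smallmatrix}-\alpha_{i+1}&0\\ \varphi_{i+1}&\beta_i\end{smallmatrix}\right]$ ($1\le i\le n-1$) and last map $\left[\begin{smallmatrix}-\Sigma\alpha_1&0\\ \Sigma\varphi_1&\beta_n\end{smallmatrix}\right]$, is an $n$-angle. Grothendieck group: $F(\mathcal{C})$ is the free abelian group on isomorphism classes $\langle A\rangle$ of objects; for an $n$-angle $A_\bullet$, $\chi(A_\bullet)=\sum_{i=1}^n(-1)^{i+1}\langle A_i\rangle$; $R(\mathcal{C})$ is generated by all $\chi(A_\bullet)$, together with $\langle 0\rangle$ when $n$ is even; $K_0(\mathcal{C})=F(\mathcal{C})/R(\mathcal{C})$, $[A]$ the class of $\langle A\rangle$. An $n$-angulated category $(\mathcal{C},\Sigma)$ is tensor $n$-angulated if it carries a symmetric monoidal structure $(\otimes,I,\alpha,\lambda,\rho,\gamma)$ with $\otimes$ an additive bifunctor, such that: (1) there are natural isomorphisms $l:A\otimes\Sigma B\to\Sigma(A\otimes B)$ and $r:\Sigma A\otimes B\to\Sigma(A\otimes B)$; (2) for every object $A$ and every $n$-angle $A_1\xrightarrow{\alpha_1}\cdots\xrightarrow{\alpha_{n-1}}A_n\xrightarrow{\alpha_n}\Sigma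 A_1$, the sequences $A\otimes A_1\xrightarrow{1\otimes\alpha_1}\cdots\xrightarrow{1\otimes\alpha_{n-1}}A\otimes A_n\xrightarrow{l\circ(1\otimes\alpha_n)}\Sigma(A\otimes A_1)$ and $A_1\otimes A\xrightarrow{\alpha_1\otimes1}\cdots\xrightarrow{\alpha_{n-1}\otimes1}A_n\otimes A\xrightarrow{r\circ(\alpha_n\otimes1)}\Sigma(A_1\otimes A)$ are $n$-angles; (3) $\lambda_{\Sigma A}=\Sigma\lambda_A\circ l$ and $\rho_{\Sigma A}=\Sigma\rho_A\circ r$; (4) $\Sigma l\circ r=-\,\Sigma r\circ l$ as maps $\Sigma A\otimes\Sigma B\to\Sigma^2(A\otimes B)$. For $n$ odd, $K_0(\mathcal{C})$ is a commutative ring with $[A][B]=[A\otimes B]$. An additive functor $L:\mathcal{C}\to\mathcal{C}'$ between $n$-angulated categories is $n$-angulated if there is a natural isomorphism $\eta:L\circ\Sigma\to\Sigma'\circ L$ such that $L$ sends each $n$-angle $(A_\bullet,\alpha)$ to the $n$-angle $LA_1\xrightarrow{L\alpha_1}\cdots\xrightarrow{L\alpha_{n-1}}LA_n\xrightarrow{\eta\circ L\alpha_n}\Sigma'LA_1$. An $n$-angulated subcategory of $(\mathcal{C},\Sigma)$ is a full subcategory $\mathcal{A}$, closed under isomorphisms, on which $\Sigma$ restricts to an automorphism, equipped with $n$-angles making $(\mathcal{A},\Sigma)$ $n$-angulated, such that the inclusion $\mathcal{A}\to\mathcal{C}$ is $n$-angulated. $\mathcal{A}$ is dense if every object of $\mathcal{C}$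 is a direct summand of an object of $\mathcal{A}$; complete if whenever an $n$-angle $A_1\to\cdots\to A_n\to\Sigma A_1$ in $\mathcal{C}$ has $n-1$ of $A_1,\dots,A_n$ in $\mathcal{A}$, the remaining one is in $\mathcal{A}$. An $n$-angulated tensor ideal is an $n$-angulated subcategory $\mathcal{A}$ such that $C\otimes A\in\mathcal{A}$ for all $A\in\mathcal{A}$, $C\in\mathcal{C}$; it is an $n$-angulated tensor prime ideal if moreover $C\otimes C'\in\mathcal{A}$ (for $C,C'\in\mathcal{C}$) implies $C\in\mathcal{A}$ or $C'\in\mathcal{A}$. $\operatorname{Im}K_0(\mathcal{A})$ is the image of the homomorphism $K_0(\mathcal{A})\to K_0(\mathcal{C})$, $[A]\mapsto[A]$, induced by the inclusion. *)

(* Defs.v *)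
From HB Require Import structures.
From mathcomp Require Import all_boot all_algebra.
From mathcomp Require Import boolp.
Set Implicit Arguments. Unset Strict Implicit. Unset Printing Implicit Defensive.
Import GRing.Theory.
Local Open Scope ring_scope.

Record Cat := {
  Obj :> Type;
  Hom : Obj -> Obj -> zmodType;
  comp : forall A B D : Obj, Hom B D -> Hom A B -> Hom A D;
  idm : forall A : Obj, Hom A A }.
Arguments Hom {c}.
Arguments comp {c A B D}.
Arguments idm {c}.
Notation "g \oc f" := (comp g f) (at level 40, left associativity).

Section Cats.
Variable C : Cat.

Definition is_zero_obj (Z : C) : Prop :=
  (forall A (f g : Hom A Z), f = g) /\ (forall A (f g : Hom Z A), f = g).

Definition biprod (A B S : C) (i1 : Hom A S) (i2 : Hom B S)
  (p1 : Hom S A) (p2 : Hom S B) : Prop :=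
  [/\ p1 \oc i1 = idm A, p2 \oc i2 = idm B, p1 \oc i2 = 0, p2 \oc i1 = 0
    & i1 \oc p1 + i2 \oc p2 = idm S].

Definition is_iso (A B : C) (f : Hom A B) : Prop :=
  exists g : Hom B A, g \oc f = idm A /\ f \oc g = idm B.

Definition isomorphic (A B : C) : Prop := exists f : Hom A B, is_iso f.

Definition additive_cat : Prop :=
  [/\ (forall (A B D E : C) (h : Hom D E) (g : Hom B D) (f : Hom A B),
          h \oc (g \oc f) = (h \oc g) \oc f),
      (forall (A B : C) (f : Hom A B), idm B \oc f = f) /\
      (forall (A B : C) (f : Hom A B), f \oc idm A = f),
      (forall (A B D : C) (g1 g2 : Hom B D) (f : Hom A B),
          (g1 + g2) \oc f = g1 \oc f + g2 \oc f),
      (forall (A B D : C) (g : Hom B D) (f1 f2 : Hom A B),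
          g \oc (f1 + f2) = g \oc f1 + g \oc f2)
    & ((exists Z : C, is_zero_obj Z)
    /\ (forall A B : C, exists (S : C) (i1 : Hom A S) (i2 : Hom B S)
          (p1 : Hom S A) (p2 : Hom S B), biprod i1 i2 p1 p2))].

End Cats.

Record Shift (C : Cat) := {
  sh :> C -> C;
  shm : forall A B : C, Hom A B -> Hom (sh A) (sh B) }.
Arguments shm {C} s {A B}.

Definition shift_ok (C : Cat) (S : Shift C) : Prop :=
  [/\ (forall A : C, shm S (idm A) = idm (S A)),
      (forall (A B D : C) (g : Hom B D) (f : Hom A B),
          shm S (g \oc f) = shm S g \oc shm S f),
      (forall (A B : C) (f g : Hom A B), shm S (f + g) = shm S f + shm S g),
      bijective (sh S)
    & (forall A B : C, bijective (@shm C S A B))].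

(* n-Sigma-sequences, 0-indexed: A_1..A_n is ob 0 .. ob (n.-2.+1).   *)
(* Values of ob/mor outside this range are irrelevant junk.           *)
Record nsigseq (C : Cat) (S : Shift C) (n : nat) := {
  ob : nat -> C;
  mor : forall i, Hom (ob i) (ob i.+1);        (* alpha_{i+1} for i < n-1 *)
  lst : Hom (ob n.-2.+1) (S (ob 0)) }.
Arguments ob {C S n}.
Arguments mor {C S n}.
Arguments lst {C S n}.

Section Seqs.
Variables (C : Cat) (S : Shift C) (n : nat).
Local Notation L := n.-2.+1.
Local Notation nsigseq := (nsigseq S n).

Definition seq_in (P : C -> Prop) (X : nsigseq) : Prop :=
  forall i, (i <= L)%N -> P (ob X i).

Definition is_smor (X Y : nsigseq) (phi : forall i, Hom (ob X i) (ob Y i)) :=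
  (forall i, (i < L)%N -> mor Y i \oc phi i = phi i.+1 \oc mor X i) /\
  lst Y \oc phi L = shm S (phi 0%N) \oc lst X.

Definition siso (X Y : nsigseq) : Prop :=
  exists phi : forall i, Hom (ob X i) (ob Y i), is_smor phi /\ forall i, (i <= L)%N -> is_iso (phi i).

Definition is_dsum (X Y Z : nsigseq) : Prop :=
  exists (i1 : forall i, Hom (ob X i) (ob Z i)) (i2 : forall i, Hom (ob Y i) (ob Z i))
         (p1 : forall i, Hom (ob Z i) (ob X i)) (p2 : forall i, Hom (ob Z i) (ob Y i)),
    [/\ is_smor i1, is_smor i2, is_smor p1, is_smor p2
      & forall i, (i <= L)%N -> biprod (i1 i) (i2 i) (p1 i) (p2 i)].

(* Y is (isomorphic, via the displayed isomorphisms, to) the left rotation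
   A_2 -> ... -> A_n -> Sigma A_1 -(-1)^n Sigma alpha_1-> Sigma A_2 of X *)
Definition is_rot (X Y : nsigseq) : Prop :=
  exists (psi : forall i, Hom (ob Y i) (ob X i.+1)) (psiL : Hom (ob Y L) (S (ob X 0%N))),
    [/\ forall i, (i < L)%N -> is_iso (psi i),
        is_iso psiL,
        forall i, (i.+1 < L)%N -> psi i.+1 \oc mor Y i = mor X i.+1 \oc psi i,
        psiL \oc mor Y n.-2 = lst X \oc psi n.-2
      & shm S (psi 0%N) \oc lst Y
          = (if odd n then - shm S (mor X 0%N) else shm S (mor X 0%N)) \oc psiL].

(* X is a trivial sequence  A -1-> A -> 0 -> ... -> 0 -> Sigma A
   (up to the isomorphism given by mor X 0) *)
Definition is_triv (X : nsigseq) : Prop :=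
  is_iso (mor X 0%N) /\ forall i, (2 <= i <= L)%N -> is_zero_obj (ob X i).

Definition is_cone (X Y : nsigseq) (phi : forall i, Hom (ob X i) (ob Y i)) (Z : nsigseq) :=
  exists (jl : forall i, Hom (ob X i.+1) (ob Z i)) (jr : forall i, Hom (ob Y i) (ob Z i))
         (ql : forall i, Hom (ob Z i) (ob X i.+1)) (qr : forall i, Hom (ob Z i) (ob Y i))
         (jlL : Hom (S (ob X 0%N)) (ob Z L)) (jrL : Hom (ob Y L) (ob Z L))
         (qlL : Hom (ob Z L) (S (ob X 0%N))) (qrL : Hom (ob Z L) (ob Y L)),
    [/\ forall i, (i < L)%N -> biprod (jl i) (jr i) (ql i) (qr i),
        biprod jlL jrL qlL qrL,
        forall i, (i.+1 < L)%N ->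
          mor Z i = jl i.+1 \oc (- mor X i.+1) \oc ql i
                    + jr i.+1 \oc phi i.+1 \oc ql i + jr i.+1 \oc mor Y i \oc qr i,
        mor Z n.-2 = jlL \oc (- lst X) \oc ql n.-2
                    + jrL \oc phi L \oc ql n.-2 + jrL \oc mor Y n.-2 \oc qr n.-2
      & lst Z = shm S (jl 0%N) \oc (- shm S (mor X 0%N)) \oc qlL
                + shm S (jr 0%N) \oc shm S (phi 0%N) \oc qlL + shm S (jr 0%N) \oc lst Y \oc qrL].

(* NN is an n-angulation of the full subcategory on the objects
   satisfying P (take P := fun _ => True for the whole category). *)
Definition nangulation (P : C -> Prop) (NN : nsigseq -> Prop) : Prop :=
  [/\ (forall X, NN X -> seq_in P X),
      ((forall X Y, seq_in P Y -> NN X -> siso X Y -> NN Y) /\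
      (forall X Y Z, seq_in P Z -> NN X -> NN Y -> is_dsum X Y Z -> NN Z) /\
      (forall X Y Z, seq_in P X -> seq_in P Y -> NN Z -> is_dsum X Y Z -> NN X) /\
      (forall X, seq_in P X -> is_triv X -> NN X)),
      (forall (A B : C) (f : Hom A B), P A -> P B ->
         exists X, NN X /\ exists (u0 : Hom A (ob X 0%N)) (u1 : Hom B (ob X 1%N)),
           [/\ is_iso u0, is_iso u1 & mor X 0%N \oc u0 = u1 \oc f]) /\
      (forall X Y, seq_in P X -> seq_in P Y -> is_rot X Y -> (NN X <-> NN Y)),
      (forall X Y, NN X -> NN Y -> forall (f0 : Hom (ob X 0%N) (ob Y 0%N))
          (f1 : Hom (ob X 1%N) (ob Y 1%N)), mor Y 0%N \oc f0 = f1 \oc mor X 0%N ->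
          exists phi : forall i, Hom (ob X i) (ob Y i), [/\ is_smor phi, phi 0%N = f0 & phi 1%N = f1])
    &
      (forall X Y, NN X -> NN Y -> forall (f0 : Hom (ob X 0%N) (ob Y 0%N))
          (f1 : Hom (ob X 1%N) (ob Y 1%N)), mor Y 0%N \oc f0 = f1 \oc mor X 0%N ->
          exists phi : forall i, Hom (ob X i) (ob Y i), [/\ is_smor phi, phi 0%N = f0, phi 1%N = f1 &
             forall Z, seq_in P Z -> is_cone phi Z -> NN Z])].

Definition twist (X : nsigseq) (e : Hom (S (ob X 0%N)) (S (ob X 0%N))) : nsigseq :=
  {| ob := ob X; mor := mor X; lst := e \oc lst X |}.

End Seqs.

Record TensorData (C : Cat) (S : Shift C) := {
  tobj : C -> C -> C;
  thom : forall A B A' B' : C, Hom A A' -> Hom B B' -> Hom (tobj A B) (tobj A' B');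
  tunit : C;
  tass : forall A B D : C, Hom (tobj (tobj A B) D) (tobj A (tobj B D));
  tlu : forall A : C, Hom (tobj tunit A) A;
  tru : forall A : C, Hom (tobj A tunit) A;
  tsym : forall A B : C, Hom (tobj A B) (tobj B A);
  lsh : forall A B : C, Hom (tobj A (S B)) (S (tobj A B));
  rsh : forall A B : C, Hom (tobj (S A) B) (S (tobj A B)) }.
Arguments tobj {C S}.
Arguments thom {C S} t {A B A' B'}.
Arguments tunit {C S}.
Arguments tass {C S}.
Arguments tlu {C S}.
Arguments tru {C S}.
Arguments tsym {C S}.
Arguments lsh {C S}.
Arguments rsh {C S}.

Section Tensor.
Variables (C : Cat) (S : Shift C) (n : nat) (T : TensorData S).
Local Notation L := n.-2.+1.
Local Notation "A ** B" := (tobj T A B) (at level 30).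

Definition tens_l (A : C) (X : nsigseq S n) : nsigseq S n :=
  {| ob := fun i => A ** ob X i;
     mor := fun i => thom T (idm A) (mor X i);
     lst := lsh T A (ob X 0%N) \oc thom T (idm A) (lst X) |}.
Definition tens_r (A : C) (X : nsigseq S n) : nsigseq S n :=
  {| ob := fun i => ob X i ** A;
     mor := fun i => thom T (mor X i) (idm A);
     lst := rsh T (ob X 0%N) A \oc thom T (lst X) (idm A) |}.

Definition tensor_nang (N : nsigseq S n -> Prop) : Prop :=
  [/\
      (forall A B : C, thom T (idm A) (idm B) = idm (A ** B))
    /\ (forall (A B D A' B' D' : C) (g : Hom B D) (f : Hom A B)
          (g' : Hom B' D') (f' : Hom A' B'),
          thom T (g \oc f) (g' \oc f') = thom T g g' \oc thom T f f')
    /\ (forall (A B A' B' : C) (f g : Hom A B) (h : Hom A' B'),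
          thom T (f + g) h = thom T f h + thom T g h)
    /\ (forall (A B A' B' : C) (h : Hom A B) (f g : Hom A' B'),
          thom T h (f + g) = thom T h f + thom T h g),
      (forall A B D : C, is_iso (tass T A B D))
    /\ (forall A : C, is_iso (tlu T A))
    /\ (forall A : C, is_iso (tru T A))
    /\ (forall A B : C, is_iso (tsym T A B))
    /\ (forall (A B D A' B' D' : C) (f : Hom A A') (g : Hom B B') (h : Hom D D'),
          tass T A' B' D' \oc thom T (thom T f g) h = thom T f (thom T g h) \oc tass T A B D)
    /\ (forall (A B : C) (f : Hom A B), tlu T B \oc thom T (idm (tunit T)) f = f \oc tlu T A)
    /\ (forall (A B : C) (f : Hom A B), tru T B \oc thom T f (idm (tunit T)) = f \oc tru T A)
    /\ (forall (A B A' B' : C) (f : Hom A A') (g : Hom B B'),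
          tsym T A' B' \oc thom T f g = thom T g f \oc tsym T A B)
    /\ (forall A B D E : C,
          tass T A B (D ** E) \oc tass T (A ** B) D E
          = thom T (idm A) (tass T B D E) \oc tass T A (B ** D) E \oc thom T (tass T A B D) (idm E))
    /\ (forall A B : C,
          thom T (idm A) (tlu T B) \oc tass T A (tunit T) B = thom T (tru T A) (idm B))
    /\ (forall A B D : C,
          tass T B D A \oc tsym T A (B ** D) \oc tass T A B D
          = thom T (idm B) (tsym T A D) \oc tass T B A D \oc thom T (tsym T A B) (idm D))
    /\ (forall A B : C, tsym T B A \oc tsym T A B = idm (A ** B)),
      (forall A B : C, is_iso (lsh T A B))
    /\ (forall A B : C, is_iso (rsh T A B))
    /\ (forall (A B A' B' : C) (f : Hom A A') (g : Hom B B'),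
          lsh T A' B' \oc thom T f (shm S g) = shm S (thom T f g) \oc lsh T A B)
    /\ (forall (A B A' B' : C) (f : Hom A A') (g : Hom B B'),
          rsh T A' B' \oc thom T (shm S f) g = shm S (thom T f g) \oc rsh T A B),
      (forall (A : C) (X : nsigseq S n), N X -> N (tens_l A X) /\ N (tens_r A X)) /\
      (forall A : C, tlu T (S A) = shm S (tlu T A) \oc lsh T (tunit T) A
                  /\ tru T (S A) = shm S (tru T A) \oc rsh T A (tunit T))
    &
      (forall A B : C,
          shm S (lsh T A B) \oc rsh T A (S B) = - (shm S (rsh T A B) \oc lsh T (S A) B))].

End Tensor.

Section Groth.
Variables (C : Cat) (S : Shift C) (n : nat) (N : nsigseq S n -> Prop) (T : TensorData S).

(* formal Z-linear combinations sum_k m_k <A_k> *)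
Definition Formal := seq (int * C).
Definition fneg (x : Formal) : Formal := [seq (- p.1, p.2) | p <- x].
(* coefficient of the isomorphism class of B: the image in F(C) *)
Definition fcoef (x : Formal) (B : C) : int :=
  \sum_(p <- x) (if `[< isomorphic p.2 B >] then p.1 else 0).
Definition chi (X : nsigseq S n) : Formal :=
  [seq (((-1) ^+ i)%R, ob X i) | i <- iota 0 n].
Definition fmul (x y : Formal) : Formal :=
  [seq (p.1 * q.1, tobj T p.2 q.2) | p <- x, q <- y].

Inductive inR : Formal -> Prop :=
  | inR_chi X : N X -> inR (chi X)
  | inR_zero (Z : C) : ~~ odd n -> is_zero_obj Z -> inR [:: (1, Z)]
  | inR_nil : inR [::]
  | inR_add x y : inR x -> inR y -> inR (x ++ y)
  | inR_neg x : inR x -> inR (fneg x)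
  | inR_eqF x y : (forall B, fcoef x B = fcoef y B) -> inR x -> inR y.

(* equality in K_0(C) = F(C)/R(C) *)
Definition k0eq (x y : Formal) : Prop := inR (x ++ fneg y).

(* ideals of the commutative ring K_0(C), as k0eq-saturated predicates *)
Definition K0_ideal (H : Formal -> Prop) : Prop :=
  [/\ (forall x y, k0eq x y -> H x -> H y),
      H [::],
      (forall x y, H x -> H y -> H (x ++ y)),
      (forall x, H x -> H (fneg x))
    & (forall r x, H x -> H (fmul r x))].

Definition K0_prime (H : Formal -> Prop) : Prop :=
  [/\ K0_ideal H, ~ H [:: (1, tunit T)]
    & (forall x y, H (fmul x y) -> H x \/ H y)].

Definition ImK0 (P : C -> Prop) : Formal -> Prop :=
  fun x => exists y : Formal, foldr (fun p acc => P p.2 /\ acc) True y /\ k0eq x y.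

Definition AH (H : Formal -> Prop) : C -> Prop := fun A => H [:: (1, A)].

Definition nsubcat_with (P : C -> Prop) (NA : nsigseq S n -> Prop) : Prop :=
  [/\ (forall A B : C, isomorphic A B -> P A -> P B),
      (exists Z : C, is_zero_obj Z /\ P Z) /\
      (forall A B : C, P A -> P B -> exists (D : C) (i1 : Hom A D) (i2 : Hom B D)
          (p1 : Hom D A) (p2 : Hom D B), biprod i1 i2 p1 p2 /\ P D),
      (forall A : C, P A <-> P (S A)),
      nangulation P NA
    & (* the inclusion is an n-angulated functor *)
      exists eta : forall A : C, Hom (S A) (S A),
        [/\ forall A, P A -> is_iso (eta A),
            forall (A B : C) (f : Hom A B), P A -> P B -> eta B \oc shm S f = shm S f \oc eta A
          & forall X, NA X -> N (twist (eta (ob X 0%N)))]].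

Definition tensor_ideal (P : C -> Prop) : Prop :=
  forall A B : C, P A -> P (tobj T B A).

Definition tensor_prime (P : C -> Prop) : Prop :=
  forall A B : C, P (tobj T A B) -> P A \/ P B.

Definition dense (P : C -> Prop) : Prop :=
  forall B : C, exists (A B' : C) (i1 : Hom B A) (i2 : Hom B' A)
    (p1 : Hom A B) (p2 : Hom A B'), P A /\ biprod i1 i2 p1 p2.

Definition complete (P : C -> Prop) : Prop :=
  forall X, N X -> forall j, (j <= n.-2.+1)%N ->
    (forall i, (i <= n.-2.+1)%N -> i != j -> P (ob X i)) -> P (ob X j).

Definition cd_tensor_ideal_with (P : C -> Prop) (NA : nsigseq S n -> Prop) : Prop :=
  [/\ nsubcat_with P NA, tensor_ideal P, complete P & dense P].

Definition cd_tensor_ideal (P : C -> Prop) : Prop :=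
  exists NA, cd_tensor_ideal_with P NA.

Definition restrN (P : C -> Prop) : nsigseq S n -> Prop :=
  fun X => N X /\ seq_in P X.

End Groth.

Definition proper_subcat (C : Cat) (P : C -> Prop) : Prop := exists A : C, ~ P A.

(* Main.v *)
Require Import Defs.
From HB Require Import structures.
From mathcomp Require Import all_boot all_algebra.
From mathcomp Require Import boolp zify ring.
Require Import Defs.
Set Implicit Arguments. Unset Strict Implicit. Unset Printing Implicit Defensive.
Import GRing.Theory Num.Theory.
Local Open Scope ring_scope.

Section Basic.
Variable C : Cat.
Hypothesis HC : additive_cat C.

Lemma compA (A B D E : C) (h : Hom D E) (g : Hom B D) (f : Hom A B) :
  h \oc (g \oc f) = (h \oc g) \oc f.
Proof. by case: HC => H _ _ _ _; apply: H. Qed.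
Lemma comp1l (A B : C) (f : Hom A B) : idm B \oc f = f.
Proof. by case: HC => _ [H _] _ _ _; apply: H. Qed.
Lemma comp1r (A B : C) (f : Hom A B) : f \oc idm A = f.
Proof. by case: HC => _ [_ H] _ _ _; apply: H. Qed.
Lemma compDl (A B D : C) (g1 g2 : Hom B D) (f : Hom A B) :
  (g1 + g2) \oc f = g1 \oc f + g2 \oc f.
Proof. by case: HC => _ _ H _ _; apply: H. Qed.
Lemma compDr (A B D : C) (g : Hom B D) (f1 f2 : Hom A B) :
  g \oc (f1 + f2) = g \oc f1 + g \oc f2.
Proof. by case: HC => _ _ _ H _; apply: H. Qed.
Lemma comp0l (A B D : C) (f : Hom A B) : (0 : Hom B D) \oc f = 0.
Proof.
have := compDl (0 : Hom B D) 0 f; rewrite addr0.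
by move/(congr1 (fun t => t - (0 : Hom B D) \oc f)); rewrite subrr addrK.
Qed.
Lemma comp0r (A B D : C) (g : Hom B D) : g \oc (0 : Hom A B) = 0.
Proof.
have := compDr g (0 : Hom A B) 0; rewrite addr0.
by move/(congr1 (fun t => t - g \oc (0 : Hom A B))); rewrite subrr addrK.
Qed.
Lemma compNl (A B D : C) (g : Hom B D) (f : Hom A B) : (- g) \oc f = - (g \oc f).
Proof. by apply/eqP; rewrite -subr_eq0 opprK -compDl addNr comp0l. Qed.
Lemma compNr (A B D : C) (g : Hom B D) (f : Hom A B) : g \oc (- f) = - (g \oc f).
Proof. by apply/eqP; rewrite -subr_eq0 opprK -compDr addNr comp0r. Qed.
Lemma compBl (A B D : C) (g1 g2 : Hom B D) (f : Hom A B) :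
  (g1 - g2) \oc f = g1 \oc f - g2 \oc f.
Proof. by rewrite compDl compNl. Qed.
Lemma compBr (A B D : C) (g : Hom B D) (f1 f2 : Hom A B) :
  g \oc (f1 - f2) = g \oc f1 - g \oc f2.
Proof. by rewrite compDr compNr. Qed.


Lemma iso_id (A : C) : is_iso (idm A).
Proof. by exists (idm A); rewrite comp1l. Qed.
Lemma iso_comp (A B D : C) (f : Hom A B) (g : Hom B D) :
  is_iso f -> is_iso g -> is_iso (g \oc f).
Proof.
move=> [f' [e1 e2]] [g' [e3 e4]]; exists (f' \oc g'); split.
  by rewrite -compA (compA g') e3 comp1l.
by rewrite -compA (compA f) e2 comp1l.
Qed.
Lemma iso_sym (A B : C) (f : Hom A B) (g : Hom B A) :
  g \oc f = idm A -> f \oc g = idm B -> is_iso g.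
Proof. by move=> e1 e2; exists f. Qed.
Lemma isoR (A : C) : isomorphic A A.
Proof. exists (idm A); exact: iso_id. Qed.
Lemma isoS (A B : C) : isomorphic A B -> isomorphic B A.
Proof. by move=> [f [g [e1 e2]]]; exists g, f. Qed.
Lemma isoT (A B D : C) : isomorphic A B -> isomorphic B D -> isomorphic A D.
Proof. move=> [f hf] [g hg]; exists (g \oc f); exact: iso_comp. Qed.

Lemma zeroE (Z : C) : is_zero_obj Z -> forall A (f g : Hom A Z), f = g.
Proof. by case. Qed.
Lemma zeroE' (Z : C) : is_zero_obj Z -> forall A (f g : Hom Z A), f = g.
Proof. by case. Qed.
Lemma zero_idm (Z : C) : is_zero_obj Z -> idm Z = 0.
Proof. by move=> [h _]; apply: h. Qed.
Lemma idm_zero (Z : C) : idm Z = 0 -> is_zero_obj Z.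
Proof.
move=> e; split=> A f g.
  by rewrite -(comp1l f) -(comp1l g) e !comp0l.
by rewrite -(comp1r f) -(comp1r g) e !comp0r.
Qed.
Lemma iso_zero (Z A : C) : is_zero_obj Z -> isomorphic Z A -> is_zero_obj A.
Proof.
move=> hz [f [g [e1 e2]]]; apply: idm_zero.
by rewrite -e2 -(comp1r f) (zero_idm hz) comp0r comp0l.
Qed.
Lemma zero_iso_any (Z Z' : C) (f : Hom Z Z') : is_zero_obj Z -> is_zero_obj Z' -> is_iso f.
Proof. move=> h h'; exists 0; split; [exact: (@zeroE' Z h Z) | exact: (@zeroE' Z' h' Z')]. Qed.
Lemma zero_iso (Z Z' : C) : is_zero_obj Z -> is_zero_obj Z' -> isomorphic Z Z'.
Proof. by move=> h h'; exists 0; apply: zero_iso_any. Qed.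

Lemma bpR (A B D : C) i1 i2 p1 p2 : @biprod C A B D i1 i2 p1 p2 ->
  (p1 \oc i1 = idm A) * (p2 \oc i2 = idm B) * (p1 \oc i2 = 0) * (p2 \oc i1 = 0) *
  (forall X (f : Hom X A), p1 \oc (i1 \oc f) = f) *
  (forall X (f : Hom X B), p2 \oc (i2 \oc f) = f) *
  (forall X (f : Hom X B), p1 \oc (i2 \oc f) = 0) *
  (forall X (f : Hom X A), p2 \oc (i1 \oc f) = 0).
Proof.
case=> e1 e2 e3 e4 e5; do !split => //.
- by move=> X f; rewrite compA e1 comp1l.
- by move=> X f; rewrite compA e2 comp1l.
- by move=> X f; rewrite compA e3 comp0l.
- by move=> X f; rewrite compA e4 comp0l.
Qed.

Lemma bp_ext (A B D E : C) i1 i2 p1 p2 : @biprod C A B D i1 i2 p1 p2 ->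
  forall (f g : Hom D E), f \oc i1 = g \oc i1 -> f \oc i2 = g \oc i2 -> f = g.
Proof.
case=> _ _ _ _ e f g h1 h2.
by rewrite -(comp1r f) -(comp1r g) -e !compDr !compA h1 h2.
Qed.
Lemma bp_extr (A B D E : C) i1 i2 p1 p2 : @biprod C A B D i1 i2 p1 p2 ->
  forall (f g : Hom E D), p1 \oc f = p1 \oc g -> p2 \oc f = p2 \oc g -> f = g.
Proof.
case=> _ _ _ _ e f g h1 h2.
by rewrite -(comp1l f) -(comp1l g) -e !compDl -!compA h1 h2.
Qed.

Ltac cnorm := repeat progress (rewrite ?compDl ?compDr ?compNl ?compNr ?comp0l ?comp0r -?compA ?comp1l ?comp1r
   ?addr0 ?add0r ?oppr0 ?subr0 ?sub0r).

Ltac bsimp := repeat (progress cnorm || match goal with H : biprod _ _ _ _ |- _ => progress rewrite ?(bpR H) end).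

Lemma bp_swap (a b W E D E' D' : C) i1 i2 p1 p2 j1 j2 q1 q2 k1 k2 r1 r2 m1 m2 s1 s2 :
  @biprod C a E D i1 i2 p1 p2 -> @biprod C b W E j1 j2 q1 q2 ->
  @biprod C a W E' k1 k2 r1 r2 -> @biprod C b E' D' m1 m2 s1 s2 -> isomorphic D D'.
Proof.
move=> H1 H2 H3 H4.
exists (m2 \oc k1 \oc p1 + m1 \oc q1 \oc p2 + m2 \oc k2 \oc q2 \oc p2).
exists (i1 \oc r1 \oc s2 + i2 \oc j1 \oc s1 + i2 \oc j2 \oc r2 \oc s2); split.
  apply: (bp_ext H1); first by bsimp.
  apply: (bp_ext H2); by bsimp.
apply: (bp_ext H4); first by bsimp.
apply: (bp_ext H3); by bsimp.
Qed.

Lemma cancelR (A B : C) (f : Hom A B) (g : Hom B A) :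
  g \oc f = idm A -> forall X (x : Hom X A), g \oc (f \oc x) = x.
Proof. by move=> e X x; rewrite compA e comp1l. Qed.

Lemma bp_map (A B D A' B' D' : C) i1 i2 p1 p2 j1 j2 q1 q2
   (f : Hom A A') (f' : Hom A' A) (g : Hom B B') (g' : Hom B' B) :
  @biprod C A B D i1 i2 p1 p2 -> @biprod C A' B' D' j1 j2 q1 q2 ->
  f' \oc f = idm A -> f \oc f' = idm A' -> g' \oc g = idm B -> g \oc g' = idm B' ->
  isomorphic D D'.
Proof.
move=> H1 H2 e1 e2 e3 e4.
exists (j1 \oc f \oc p1 + j2 \oc g \oc p2), (i1 \oc f' \oc q1 + i2 \oc g' \oc q2); split.
  by apply: (bp_ext H1); bsimp; rewrite ?(e1, e2, e3, e4, cancelR e1, cancelR e2, cancelR e3, cancelR e4); bsimp.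
by apply: (bp_ext H2); bsimp; rewrite ?(e1, e2, e3, e4, cancelR e1, cancelR e2, cancelR e3, cancelR e4); bsimp.
Qed.

Lemma bp_uniq (A B D D' : C) i1 i2 p1 p2 j1 j2 q1 q2 :
  @biprod C A B D i1 i2 p1 p2 -> @biprod C A B D' j1 j2 q1 q2 -> isomorphic D D'.
Proof. move=> H1 H2; apply: (bp_map H1 H2); exact: comp1l. Qed.

Lemma bp_sw (A B D : C) i1 i2 p1 p2 :
  @biprod C A B D i1 i2 p1 p2 -> @biprod C B A D i2 i1 p2 p1.
Proof. by case=> e1 e2 e3 e4 e5; split => //; rewrite addrC. Qed.

Lemma bp_zero (A Z : C) : is_zero_obj Z -> @biprod C A Z A (idm A) 0 (idm A) 0.
Proof.
move=> hz; split; rewrite ?comp1l ?comp0l ?comp0r ?addr0 //.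
exact: (@zeroE' Z hz Z).
Qed.

Lemma bp_transport (A B D D' : C) i1 i2 p1 p2 (phi : Hom D D') (psi : Hom D' D) :
  @biprod C A B D i1 i2 p1 p2 -> psi \oc phi = idm D -> phi \oc psi = idm D' ->
  @biprod C A B D' (phi \oc i1) (phi \oc i2) (p1 \oc psi) (p2 \oc psi).
Proof.
move=> H e1 e2; have H' := H; case: H' => f1 f2 f3 f4 e5.
split; rewrite ?(cancelR e1) -?compA ?(cancelR e1) ?f1 ?f2 ?f3 ?f4 //.
transitivity (phi \oc ((i1 \oc p1 + i2 \oc p2) \oc psi)); first by cnorm.
by rewrite e5 comp1l e2.
Qed.

Lemma bp_zeros (A B D : C) i1 i2 p1 p2 :
  @biprod C A B D i1 i2 p1 p2 -> is_zero_obj A -> is_zero_obj B -> is_zero_obj D.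
Proof.
move=> [_ _ _ _ e] hA hB; apply: idm_zero.
by rewrite -e -(comp1r i1) -(comp1r i2) (zero_idm hA) (zero_idm hB) !comp0r !comp0l addr0.
Qed.

Record BP (A B : C) := MkBP {
  bpo : C; bi1 : Hom A bpo; bi2 : Hom B bpo; bp1 : Hom bpo A; bp2 : Hom bpo B;
  bpH : biprod bi1 bi2 bp1 bp2 }.

Lemma exBP (A B : C) : exists b : BP A B, True.
Proof.
case: HC => _ _ _ _ [_ /(_ A B) [D [i1 [i2 [p1 [p2 H]]]]]].
by exists (MkBP H).
Qed.
Definition bp (A B : C) : BP A B := proj1_sig (cid (exBP A B)).
Definition bo (A B : C) : C := bpo (bp A B).
Lemma boH (A B : C) : biprod (bi1 (bp A B)) (bi2 (bp A B)) (bp1 (bp A B)) (bp2 (bp A B)).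
Proof. exact: bpH. Qed.

Lemma exZ : exists Z : C, is_zero_obj Z.
Proof. by case: HC => _ _ _ _ [[Z hZ] _]; exists Z. Qed.
Definition Z0 : C := proj1_sig (cid exZ).
Lemma Z0P : is_zero_obj Z0.
Proof. exact: (proj2_sig (cid exZ)). Qed.

Lemma bo_of (A B D : C) i1 i2 p1 p2 : @biprod C A B D i1 i2 p1 p2 -> isomorphic D (bo A B).
Proof. move=> H; exact: (bp_uniq H (boH A B)). Qed.

Lemma isoE (A B : C) : isomorphic A B ->
  exists (f : Hom A B) (g : Hom B A), g \oc f = idm A /\ f \oc g = idm B.
Proof. by move=> [f [g e]]; exists f, g. Qed.

Lemma bo_cong (A A' B B' : C) : isomorphic A A' -> isomorphic B B' -> isomorphic (bo A B) (bo A' B').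
Proof.
move=> /isoE [f [f' [e1 e2]]] /isoE [g [g' [e3 e4]]].
exact: (bp_map (boH A B) (boH A' B') e1 e2 e3 e4).
Qed.
Lemma bo_comm (A B : C) : isomorphic (bo A B) (bo B A).
Proof. exact: (bp_uniq (bp_sw (boH A B)) (boH B A)). Qed.
Lemma bo_swap (a b W : C) : isomorphic (bo a (bo b W)) (bo b (bo a W)).
Proof. exact: (bp_swap (boH a (bo b W)) (boH b W) (boH a W) (boH b (bo a W))). Qed.
Lemma bo_assoc (A B W : C) : isomorphic (bo A (bo B W)) (bo (bo A B) W).
Proof.
apply: isoT (bo_cong (isoR A) (bo_comm B W)) _.
apply: isoT (bo_swap _ _ _) _.
exact: bo_comm.
Qed.
Lemma bo_zr (A Z : C) : is_zero_obj Z -> isomorphic (bo A Z) A.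
Proof. move=> hz; apply: isoS; exact: bo_of (bp_zero A hz). Qed.
Lemma bo_zl (A Z : C) : is_zero_obj Z -> isomorphic (bo Z A) A.
Proof. move=> hz; apply: isoT (bo_comm _ _) _; exact: bo_zr. Qed.

Fixpoint rz (l : seq C) : C := if l is a :: l' then bo a (rz l') else Z0.

Lemma rz_cat (l1 l2 : seq C) : isomorphic (rz (l1 ++ l2)) (bo (rz l1) (rz l2)).
Proof.
elim: l1 => [|a l1 IH] /=; first exact: isoS (bo_zl _ Z0P).
apply: isoT (bo_cong (isoR a) IH) _; exact: bo_assoc.
Qed.
Lemma rz1 (a : C) : isomorphic (rz [:: a]) a.
Proof. exact: bo_zr Z0P. Qed.


Definition ind (A B : C) : int := if `[< isomorphic A B >] then 1 else 0.
Definition feq (x y : Formal C) := forall B, fcoef x B = fcoef y B.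

Lemma fcoefE (x : Formal C) B : fcoef x B = \sum_(p <- x) p.1 * ind p.2 B.
Proof. by apply: eq_bigr => p _; rewrite /ind; case: ifP; rewrite ?mulr1 ?mulr0. Qed.
Lemma fcoef_nil B : fcoef ([::] : Formal C) B = 0.
Proof. by rewrite /fcoef big_nil. Qed.
Lemma fcoef_cons p (x : Formal C) B : fcoef (p :: x) B = p.1 * ind p.2 B + fcoef x B.
Proof. by rewrite !fcoefE big_cons. Qed.
Lemma fcoef_cat (x y : Formal C) B : fcoef (x ++ y) B = fcoef x B + fcoef y B.
Proof. by rewrite /fcoef big_cat. Qed.
Lemma fcoef_neg (x : Formal C) B : fcoef (fneg x) B = - fcoef x B.
Proof. by rewrite !fcoefE big_map -sumrN; apply: eq_bigr => p _ /=; rewrite mulNr. Qed.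
Lemma fcoef1 (m : int) (A : C) B : fcoef [:: (m, A)] B = m * ind A B.
Proof. by rewrite fcoef_cons fcoef_nil addr0. Qed.

Lemma ind_isoL (A A' B : C) : isomorphic A A' -> ind A B = ind A' B.
Proof.
move=> h; rewrite /ind; case: (asboolP (isomorphic A B)); case: (asboolP (isomorphic A' B)) => //.
- by move=> nh h'; case: nh; exact: isoT (isoS h) h'.
- by move=> h' nh; case: nh; exact: isoT h h'.
Qed.
Lemma ind_isoR (A B B' : C) : isomorphic B B' -> ind A B = ind A B'.
Proof.
move=> h; rewrite /ind; case: (asboolP (isomorphic A B)); case: (asboolP (isomorphic A B')) => //.
- by move=> nh h'; case: nh; exact: isoT h' h.
- by move=> h' nh; case: nh; exact: isoT h' (isoS h).
Qed.
Lemma ind_refl (A : C) : ind A A = 1.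
Proof. by rewrite /ind; case: asboolP => // []; case; apply: isoR. Qed.
Lemma ind_sym (A B : C) : ind A B = ind B A.
Proof.
rewrite /ind; case: (asboolP (isomorphic A B)); case: (asboolP (isomorphic B A)) => //.
- by move=> nh h; case: nh; exact: isoS.
- by move=> h nh; case: nh; exact: isoS.
Qed.

Lemma feq_iso1 (m : int) (A A' : C) : isomorphic A A' -> feq [:: (m, A)] [:: (m, A')].
Proof. by move=> h B; rewrite !fcoef1 (ind_isoL _ h). Qed.

Definition closedF (Q : Formal C -> Prop) :=
  [/\ Q [::], (forall x y, Q x -> Q y -> Q (x ++ y)), (forall x, Q x -> Q (fneg x))
    & (forall x y, feq x y -> Q x -> Q y)].

Definition scale (m : int) (z : Formal C) : Formal C := [seq (m * p.1, p.2) | p <- z].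
Lemma fcoef_scale m z B : fcoef (scale m z) B = m * fcoef z B.
Proof.
rewrite !fcoefE big_map mulr_sumr; apply: eq_bigr => p _ /=; by rewrite mulrA.
Qed.

Section Closed.
Variable Q : Formal C -> Prop.
Hypothesis HQ : closedF Q.
Lemma Qnil : Q [::]. Proof. by case: HQ. Qed.
Lemma Qcat x y : Q x -> Q y -> Q (x ++ y). Proof. by case: HQ => _ h _ _; apply: h. Qed.
Lemma Qneg x : Q x -> Q (fneg x). Proof. by case: HQ => _ _ h _; apply: h. Qed.
Lemma Qfeq x y : feq x y -> Q x -> Q y. Proof. by case: HQ => _ _ _ h; apply: h. Qed.
Lemma Qfeq' x y : (forall B, fcoef x B = fcoef y B) -> Q y -> Q x.
Proof. by move=> e; apply: Qfeq => B; rewrite e. Qed.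
Lemma Qsub x y : Q x -> Q y -> Q (x ++ fneg y). Proof. by move=> hx hy; apply: Qcat => //; apply: Qneg. Qed.
Lemma Qscale m z : Q z -> Q (scale m z).
Proof.
move=> hz.
have hpos k : Q (scale k%:Z z).
  elim: k => [|k IH].
    by apply: (Qfeq' _ Qnil) => B; rewrite fcoef_scale fcoef_nil mul0r.
  apply: (Qfeq' _ (Qcat IH hz)) => B.
  by rewrite fcoef_scale fcoef_cat fcoef_scale -[k.+1]addn1 PoszD mulrDl mul1r.
case: m => k; first exact: hpos.
apply: (Qfeq' _ (Qneg (hpos k.+1))) => B.
by rewrite fcoef_scale fcoef_neg fcoef_scale NegzE mulNr.
Qed.
Lemma Qsum_in (I : Type) (s : seq I) (f : I -> Formal C) x (Pr : I -> Prop) :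
  (forall i, Pr i -> Q (f i)) -> foldr (fun i acc => Pr i /\ acc) True s ->
  (forall B, fcoef x B = \sum_(i <- s) fcoef (f i) B) -> Q x.
Proof.
move=> hf hs e.
have ef : forall B, fcoef x B = fcoef (flatten [seq f i | i <- s]) B.
  move=> B; rewrite e; elim: (s) => [|i s' IH]; first by rewrite big_nil /= fcoef_nil.
  by rewrite big_cons /= fcoef_cat IH.
apply: (Qfeq' ef); elim: s hs {e ef} => [|i s IH] /= => [_|[hi hs]]; first exact: Qnil.
exact: Qcat (hf i hi) (IH hs).
Qed.
Lemma Qsum (I : Type) (s : seq I) (f : I -> Formal C) x :
  (forall i, Q (f i)) -> (forall B, fcoef x B = \sum_(i <- s) fcoef (f i) B) -> Q x.
Proof.
move=> hf; apply: (@Qsum_in I s f x (fun _ => True)) => //.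
by elim: s.
Qed.
End Closed.

Inductive Gen (g : Formal C -> Prop) : Formal C -> Prop :=
  | gen_g x : g x -> Gen g x
  | gen_nil : Gen g [::]
  | gen_add x y : Gen g x -> Gen g y -> Gen g (x ++ y)
  | gen_neg x : Gen g x -> Gen g (fneg x)
  | gen_eqF x y : feq x y -> Gen g x -> Gen g y.
Lemma Gen_closed g : closedF (Gen g).
Proof. split; [exact: gen_nil | exact: gen_add | exact: gen_neg | exact: gen_eqF]. Qed.
Lemma Gen_min (g : Formal C -> Prop) (Q : Formal C -> Prop) :
  closedF Q -> (forall x, g x -> Q x) -> forall x, Gen g x -> Q x.
Proof.
move=> HQ hg x; elim=> {x} [x /hg //||x y _ hx _ hy|x _ hx|x y e _ hx].
- exact: Qnil.
- exact: Qcat.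
- exact: Qneg.
- exact: Qfeq e hx.
Qed.


Definition ms (l : seq C) : Formal C := [seq (1%:Z, a) | a <- l].
Lemma fcoef_ms l B : fcoef (ms l) B = \sum_(a <- l) ind a B.
Proof. by rewrite fcoefE big_map; apply: eq_bigr => a _ /=; rewrite mul1r. Qed.
Lemma ind_ge0 (A B : C) : 0 <= ind A B.
Proof. by rewrite /ind; case: ifP. Qed.
Lemma fcoef_ms_ge0 l B : 0 <= fcoef (ms l) B.
Proof. by rewrite fcoef_ms; apply: sumr_ge0 => a _; apply: ind_ge0. Qed.
Lemma ms_cat l1 l2 B : fcoef (ms (l1 ++ l2)) B = fcoef (ms l1) B + fcoef (ms l2) B.
Proof. by rewrite /ms map_cat fcoef_cat. Qed.
Lemma ms_cons a l B : fcoef (ms (a :: l)) B = ind a B + fcoef (ms l) B.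
Proof. by rewrite fcoef_cons mul1r. Qed.
Lemma ms_nil B : fcoef (ms [::]) B = 0.
Proof. exact: fcoef_nil. Qed.

Lemma ms_split l a : fcoef (ms l) a != 0 ->
  exists l1 b l2, l = l1 ++ b :: l2 /\ isomorphic b a.
Proof.
elim: l => [|c l IH]; first by rewrite ms_nil eqxx.
rewrite ms_cons /ind; case: asboolP => [h _|_]; first by exists [::], c, l.
rewrite add0r => /IH [l1 [b [l2 [-> h]]]]; by exists (c :: l1), b, l2.
Qed.

Lemma rz_mid l1 b l2 : isomorphic (rz (l1 ++ b :: l2)) (bo b (rz (l1 ++ l2))).
Proof.
elim: l1 => [|c l1 IH] /=; first exact: isoR.
apply: isoT (bo_cong (isoR c) IH) _; exact: bo_swap.
Qed.

Lemma rz_perm l l' : feq (ms l) (ms l') -> isomorphic (rz l) (rz l').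
Proof.
elim: l l' => [|a l IH] l' e.
  case: l' e => [|b l'] e; first exact: isoR.
  have := e b; rewrite ms_nil ms_cons ind_refl => /eqP.
  by rewrite eq_sym paddr_eq0 ?ler01 ?fcoef_ms_ge0 // oner_eq0.
have : fcoef (ms l') a != 0.
  rewrite -e ms_cons ind_refl; apply: lt0r_neq0.
  by apply: ltr_wpDr; [exact: fcoef_ms_ge0 | exact: ltr01].
case/ms_split=> l1 [b [l2 [el' hb]]]; subst l'.
apply: isoT (isoS (rz_mid _ _ _)); apply: bo_cong; first exact: isoS.
apply: IH => B; apply: (@addrI _ (ind a B)).
by rewrite -ms_cons e ms_cat ms_cons ms_cat (ind_isoL _ hb) addrCA.
Qed.


Variable S : Shift C.
Hypothesis HS : shift_ok S.

Lemma shm1 (A : C) : shm S (idm A) = idm (S A).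
Proof. by case: HS. Qed.
Lemma shmM (A B D : C) (g : Hom B D) (f : Hom A B) : shm S (g \oc f) = shm S g \oc shm S f.
Proof. by case: HS => _ h _ _ _; apply: h. Qed.
Lemma shmD (A B : C) (f g : Hom A B) : shm S (f + g) = shm S f + shm S g.
Proof. by case: HS => _ _ h _ _; apply: h. Qed.
Lemma shm0 (A B : C) : shm S (0 : Hom A B) = 0.
Proof.
have := shmD (0 : Hom A B) 0; rewrite addr0.
by move/(congr1 (fun t => t - shm S (0 : Hom A B))); rewrite subrr addrK.
Qed.
Lemma shmN (A B : C) (f : Hom A B) : shm S (- f) = - shm S f.
Proof. by apply/eqP; rewrite -subr_eq0 opprK -shmD addNr shm0. Qed.
Lemma shm_zero (Z : C) : is_zero_obj Z -> is_zero_obj (S Z).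
Proof. by move=> hz; apply: idm_zero; rewrite -shm1 (zero_idm hz) shm0. Qed.
Lemma shm_iso (A B : C) (f : Hom A B) : is_iso f -> is_iso (shm S f).
Proof. by move=> [g [e1 e2]]; exists (shm S g); rewrite -!shmM e1 e2 !shm1. Qed.
Lemma shm_bp (A B D : C) i1 i2 p1 p2 : @biprod C A B D i1 i2 p1 p2 ->
  biprod (shm S i1) (shm S i2) (shm S p1) (shm S p2).
Proof. by case=> e1 e2 e3 e4 e5; split; rewrite -?shmM -?shmD ?e1 ?e2 ?e3 ?e4 ?e5 ?shm1 ?shm0. Qed.

Variable n : nat.
Variable N : nsigseq S n -> Prop.
Hypothesis HN : nangulation (fun _ => True) N.
Hypothesis nodd : odd n.
Hypothesis n3 : (3 <= n)%N.
Local Notation L := n.-2.+1.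

Lemma seq_inT (X : nsigseq S n) : seq_in (fun _ => True) X.
Proof. by move=> i _. Qed.

Lemma N_triv (X : nsigseq S n) : is_triv X -> N X.
Proof. by case: HN => _ [_ [_ [_ h]]] _ _ _; apply: h. Qed.
Lemma N_rot (X Y : nsigseq S n) : is_rot X Y -> (N X <-> N Y).
Proof. by case: HN => _ _ [_ h] _ _; apply: h. Qed.
Lemma N_dsum (X Y Z : nsigseq S n) : N X -> N Y -> is_dsum X Y Z -> N Z.
Proof. by case: HN => _ [_ [h _]] _ _ _; apply: h. Qed.
Lemma N_siso (X Y : nsigseq S n) : N X -> siso X Y -> N Y.
Proof. by case: HN => _ [h _] _ _ _; apply: h. Qed.

Definition mkh (Y : C) (a b : bool) : Hom (if a then Y else Z0) (if b then Y else Z0) :=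
  match a as a0, b as b0 return Hom (if a0 then Y else Z0) (if b0 then Y else Z0) with
  | true, true => idm Y
  | _, _ => 0
  end.
Definition posk (k i : nat) : bool := (i == k) || (i == k.+1).
Definition pseq (k : nat) (Y : C) : nsigseq S n :=
  {| ob := fun i => if posk k i then Y else Z0;
     mor := fun i => mkh Y (posk k i) (posk k i.+1);
     lst := 0 |}.

Lemma pseq_zero k Y i : i != k -> i != k.+1 -> is_zero_obj (ob (pseq k Y) i).
Proof. by move=> h1 h2; rewrite /= /posk (negbTE h1) (negbTE h2); apply: Z0P. Qed.
Lemma pseq_k k Y : ob (pseq k Y) k = Y.
Proof. by rewrite /= /posk eqxx. Qed.
Lemma pseq_k1 k Y : ob (pseq k Y) k.+1 = Y.
Proof. by rewrite /= /posk eqxx orbT. Qed.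

Lemma pseq0_N Y : N (pseq 0 Y).
Proof.
apply: N_triv; split; first exact: iso_id.
move=> i /andP [h2 _]; apply: pseq_zero; lia.
Qed.

Lemma pseq_rot k Y : (k.+1 < L)%N -> is_rot (pseq k.+1 Y) (pseq k Y).
Proof.
move=> hk.
have zL : is_zero_obj (ob (pseq k Y) L).
  by apply: pseq_zero; lia.
exists (fun i => idm (ob (pseq k Y) i)), 0; split.
- by move=> i _; exact: iso_id.
- apply: zero_iso_any => //; apply: shm_zero; exact: Z0P.
- by move=> i _; rewrite comp1l comp1r.
- apply: (zeroE (shm_zero Z0P)).
- apply: (zeroE' zL).
Qed.

Lemma pseq_N k Y : (k < L)%N -> N (pseq k Y).
Proof.
elim: k => [|k IH] hk; first exact: pseq0_N.
apply/(N_rot (pseq_rot Y hk)); apply: IH; exact: ltnW.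
Qed.


Definition di1 (X Y : nsigseq S n) i := bi1 (bp (ob X i) (ob Y i)).
Definition di2 (X Y : nsigseq S n) i := bi2 (bp (ob X i) (ob Y i)).
Definition dp1 (X Y : nsigseq S n) i := bp1 (bp (ob X i) (ob Y i)).
Definition dp2 (X Y : nsigseq S n) i := bp2 (bp (ob X i) (ob Y i)).
Definition dsum (X Y : nsigseq S n) : nsigseq S n :=
  {| ob := fun i => bo (ob X i) (ob Y i);
     mor := fun i => di1 X Y i.+1 \oc mor X i \oc dp1 X Y i + di2 X Y i.+1 \oc mor Y i \oc dp2 X Y i;
     lst := shm S (di1 X Y 0) \oc lst X \oc dp1 X Y L + shm S (di2 X Y 0) \oc lst Y \oc dp2 X Y L |}.
Lemma dH (X Y : nsigseq S n) i : biprod (di1 X Y i) (di2 X Y i) (dp1 X Y i) (dp2 X Y i).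
Proof. exact: boH. Qed.

Lemma dsum_isd X Y : is_dsum X Y (dsum X Y).
Proof.
have h0 := dH X Y 0; have hL := dH X Y L; have hs := shm_bp (dH X Y 0).
rewrite /is_dsum; exists (di1 X Y), (di2 X Y), (dp1 X Y), (dp2 X Y); split.
- split; last by bsimp.
  by move=> i _ /=; have := dH X Y i; have := dH X Y i.+1; move=> ? ?; bsimp.
- split; last by bsimp.
  by move=> i _ /=; have := dH X Y i; have := dH X Y i.+1; move=> ? ?; bsimp.
- split; last by bsimp.
  by move=> i _ /=; have := dH X Y i; have := dH X Y i.+1; move=> ? ?; bsimp.
- split; last by bsimp.
  by move=> i _ /=; have := dH X Y i; have := dH X Y i.+1; move=> ? ?; bsimp.
- by move=> i _; apply: dH.
Qed.

Lemma dsum_N X Y : N X -> N Y -> N (dsum X Y).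
Proof. move=> hX hY; exact: N_dsum hX hY (dsum_isd X Y). Qed.

Lemma dsum_smor1 X Y : is_smor (X:=X) (Y:=dsum X Y) (di1 X Y).
Proof.
split; last by have h0 := dH X Y 0; have hL := dH X Y L; bsimp.
by move=> i _ /=; have := dH X Y i; have := dH X Y i.+1; move=> ? ?; bsimp.
Qed.

Lemma fcoef_chi (X : nsigseq S n) B :
  fcoef (chi X) B = \sum_(i <- iota 0 n) (-1) ^+ i * ind (ob X i) B.
Proof. by rewrite fcoefE big_map. Qed.

Definition spg (z : Formal C) : Prop :=
  exists A B D i1 i2 p1 p2, @biprod C A B D i1 i2 p1 p2 /\ z = [:: (1, D); (-1, A); (-1, B)].
Definition Spl := Gen spg.
Lemma Spl_closed : closedF Spl. Proof. exact: Gen_closed. Qed.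

Lemma Spl_bp (A B D : C) i1 i2 p1 p2 : @biprod C A B D i1 i2 p1 p2 ->
  Spl [:: (1, D); (-1, A); (-1, B)].
Proof. by move=> h; apply: gen_g; exists A, B, D, i1, i2, p1, p2. Qed.

Lemma Spl_zero (Z : C) (m : int) : is_zero_obj Z -> Spl [:: (m, Z)].
Proof.
move=> hz; have := Spl_bp (bp_zero Z hz) => /(Qneg Spl_closed) /(Qscale Spl_closed m).
move=> h; apply: (Qfeq Spl_closed _ h) => B.
rewrite fcoef_scale fcoef_neg !fcoef_cons fcoef_nil /=; ring.
Qed.

Lemma chi_dsum X Y : Spl (chi (dsum X Y) ++ fneg (chi X ++ chi Y)).
Proof.
apply: (Qsum Spl_closed (s := iota 0 n)
   (f := fun i => scale ((-1) ^+ i) [:: (1, ob (dsum X Y) i); (-1, ob X i); (-1, ob Y i)])).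
  by move=> i; apply: (Qscale Spl_closed); exact: Spl_bp (dH X Y i).
move=> B; rewrite fcoef_cat fcoef_neg fcoef_cat !fcoef_chi opprD -!sumrN -!big_split.
apply: eq_bigr => i _; rewrite fcoef_scale !fcoef_cons fcoef_nil /=; ring.
Qed.


Lemma foldr_iota (Pr : nat -> Prop) m l :
  (forall i, (m <= i < m + l)%N -> Pr i) -> foldr (fun i acc => Pr i /\ acc) True (iota m l).
Proof.
elim: l m => [|l IH] m h //=; split; first by apply: h; lia.
apply: IH => i hi; apply: h; lia.
Qed.

Lemma foldr_and_cat (I : Type) (Pr : I -> Prop) s1 s2 :
  foldr (fun i acc => Pr i /\ acc) True s1 -> foldr (fun i acc => Pr i /\ acc) True s2 ->
  foldr (fun i acc => Pr i /\ acc) True (s1 ++ s2).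
Proof. by elim: s1 => [|a s1 IH] //= [h1 h2] h3; split => //; apply: IH. Qed.

Lemma big_cat_int (I : Type) (F : I -> int) s1 s2 :
  \sum_(i <- s1 ++ s2) F i = \sum_(i <- s1) F i + \sum_(i <- s2) F i.
Proof. exact: big_cat. Qed.
Lemma big2 (F : nat -> int) a b : \sum_(i <- [:: a; b]) F i = F a + F b.
Proof. by rewrite !big_cons big_nil addr0. Qed.

Lemma chi_pseq k Y : (k < L)%N -> Spl (chi (pseq k Y)).
Proof.
move=> hk.
have en : iota 0 n = iota 0 k ++ [:: k; k.+1] ++ iota k.+2 (n - k.+2)%N.
  have e : n = (k + (2 + (n - k.+2)))%N by lia.
  by rewrite {1}e !iotaD /= add0n addn2.
apply: (Qsum_in Spl_closed (s := iota 0 k ++ iota k.+2 (n - k.+2)%N)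
   (f := fun i => [:: ((-1) ^+ i, ob (pseq k Y) i)]) (Pr := fun i => is_zero_obj (ob (pseq k Y) i))).
- by move=> i hi; apply: Spl_zero.
- by apply: foldr_and_cat; apply: foldr_iota => i hi; apply: pseq_zero; lia.
- move=> B; rewrite fcoef_chi en !big_cat_int big2 pseq_k pseq_k1.
  under [in RHS]eq_bigr do rewrite fcoef1.
  under [X in _ = _ + X]eq_bigr do rewrite fcoef1.
  rewrite exprS; ring.
Qed.

Lemma smor_id (X : nsigseq S n) : is_smor (X:=X) (Y:=X) (fun i => idm (ob X i)).
Proof. by split; [move=> i _; rewrite comp1l comp1r | rewrite shm1 comp1l comp1r]. Qed.

Lemma smor_comp (X Y Z : nsigseq S n) phi psi :
  is_smor (X:=X) (Y:=Y) phi -> is_smor (X:=Y) (Y:=Z) psi ->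
  is_smor (X:=X) (Y:=Z) (fun i => psi i \oc phi i).
Proof.
move=> [h1 h2] [h3 h4]; split.
  by move=> i hi; rewrite compA h3 // -compA h1 // compA.
by rewrite compA h4 -compA h2 compA shmM.
Qed.

Lemma bp_i1_iso (A B D : C) i1 i2 p1 p2 :
  @biprod C A B D i1 i2 p1 p2 -> is_zero_obj B -> is_iso i1.
Proof.
move=> [e1 e2 e3 e4 e5] hz; exists p1; split=> //.
by rewrite -e5 -(comp1r i2) (zero_idm hz) comp0r comp0l addr0.
Qed.


Lemma Spl_trans x y z : Spl (x ++ fneg y) -> Spl (y ++ fneg z) -> Spl (x ++ fneg z).
Proof.
move=> h1 h2; apply: (Qfeq Spl_closed _ (Qcat Spl_closed h1 h2)) => B.
rewrite !fcoef_cat !fcoef_neg; ring.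
Qed.

Lemma chain (P : C -> Prop) (Piso : forall A B, isomorphic A B -> P A -> P B)
  (Pdense : forall B, exists Y, P (bo B Y)) (j : nat) :
  forall k (X : nsigseq S n), N X -> (j <= k <= L)%N ->
  exists (X' : nsigseq S n) (phi : forall i, Hom (ob X i) (ob X' i)),
    [/\ N X', Spl (chi X' ++ fneg (chi X)), is_smor phi,
        (forall i, (i < j)%N -> is_iso (phi i))
      & (forall i, (j <= i < k)%N -> P (ob X' i))].
Proof.
elim=> [|k IH] X hX /andP [hjk hkL].
  exists X, (fun i => idm (ob X i)); split => //.
  - apply: (Qfeq' Spl_closed _ (Qnil Spl_closed)) => B.
    by rewrite fcoef_cat fcoef_neg subrr fcoef_nil.
  - exact: smor_id.
  - by move=> i _; apply: iso_id.
  - by move=> i; lia.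
case: (leqP j k) => hj; last first.
  have -> : j = k.+1 by lia.
  exists X, (fun i => idm (ob X i)); split => //.
  - apply: (Qfeq' Spl_closed _ (Qnil Spl_closed)) => B.
    by rewrite fcoef_cat fcoef_neg subrr fcoef_nil.
  - exact: smor_id.
  - by move=> i _; apply: iso_id.
  - by move=> i; lia.
have [X1 [phi1 [hX1 hS1 hm1 hi1 hP1]]] : exists (X' : nsigseq S n) (phi : forall i, Hom (ob X i) (ob X' i)),
    [/\ N X', Spl (chi X' ++ fneg (chi X)), is_smor phi,
        (forall i, (i < j)%N -> is_iso (phi i))
      & (forall i, (j <= i < k)%N -> P (ob X' i))].
  by apply: IH => //; lia.
have [Y hY] := Pdense (ob X1 k).
have hkL' : (k < L)%N by lia.
exists (dsum X1 (pseq k Y)), (fun i => di1 X1 (pseq k Y) i \oc phi1 i); split.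
- exact: dsum_N hX1 (pseq_N Y hkL').
- apply: Spl_trans hS1.
  have h := Qcat Spl_closed (chi_dsum X1 (pseq k Y)) (chi_pseq Y hkL').
  apply: (Qfeq Spl_closed _ h) => B; rewrite !fcoef_cat !fcoef_neg !fcoef_cat; ring.
- exact: smor_comp hm1 (dsum_smor1 X1 (pseq k Y)).
- move=> i hi; apply: iso_comp; first exact: hi1.
  apply: (bp_i1_iso (dH X1 (pseq k Y) i)); apply: pseq_zero; lia.
- move=> i /andP [hji]; rewrite ltnS leq_eqVlt => /orP [/eqP ->|hik].
    by change (P (bo (ob X1 k) (ob (pseq k Y) k))); rewrite pseq_k.
  apply: (Piso (ob X1 i)); last by apply: hP1; lia.
  apply: isoS; apply: bo_zr; apply: pseq_zero; lia.
Qed.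


Lemma inR_closed : closedF (inR N).
Proof.
split; [exact: inR_nil | exact: inR_add | exact: inR_neg | exact: inR_eqF].
Qed.
Local Notation RC := inR_closed.

Lemma k0_refl x : k0eq N x x.
Proof. by apply: (Qfeq' RC _ (Qnil RC)) => B; rewrite fcoef_cat fcoef_neg subrr fcoef_nil. Qed.
Lemma k0_sym x y : k0eq N x y -> k0eq N y x.
Proof. by move=> h; apply: (Qfeq RC _ (Qneg RC h)) => B; rewrite !fcoef_neg !fcoef_cat !fcoef_neg; ring. Qed.
Lemma k0_trans x y z : k0eq N x y -> k0eq N y z -> k0eq N x z.
Proof.
move=> h1 h2; apply: (Qfeq RC _ (Qcat RC h1 h2)) => B.
rewrite !fcoef_cat !fcoef_neg; ring.
Qed.
Lemma k0_feq x y : feq x y -> k0eq N x y.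
Proof. by move=> e; apply: (Qfeq' RC _ (Qnil RC)) => B; rewrite fcoef_cat fcoef_neg e subrr fcoef_nil. Qed.
Lemma k0_cat x y x' y' : k0eq N x x' -> k0eq N y y' -> k0eq N (x ++ y) (x' ++ y').
Proof.
move=> h1 h2; apply: (Qfeq RC _ (Qcat RC h1 h2)) => B.
rewrite !fcoef_cat !fcoef_neg !fcoef_cat; ring.
Qed.
Lemma k0_neg x y : k0eq N x y -> k0eq N (fneg x) (fneg y).
Proof.
move=> h; apply: (Qfeq RC _ (Qneg RC h)) => B.
rewrite !fcoef_neg !fcoef_cat !fcoef_neg; ring.
Qed.
Lemma k0_inR x y : k0eq N x y -> inR N y -> inR N x.
Proof.
move=> h hy; apply: (Qfeq RC _ (Qcat RC h hy)) => B.
rewrite !fcoef_cat !fcoef_neg; ring.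
Qed.

Lemma sum_alt m : \sum_(i <- iota 0 m) ((-1) ^+ i : int) = (odd m)%:Z.
Proof.
elim: m => [|m IH]; first by rewrite big_nil.
rewrite -addn1 iotaD big_cat_int IH add0n big_cons big_nil addr0 -signr_odd addn1 /=.
by case: (odd m).
Qed.


Lemma inR_Z0 : inR N [:: (1, Z0)].
Proof.
have h := inR_chi (pseq0_N Z0); apply: (Qfeq RC _ h) => B.
rewrite fcoef_chi fcoef1 mul1r.
have e : forall i, ind (ob (pseq 0 Z0) i) B = ind Z0 B by move=> i /=; case: ifP.
under eq_bigr do rewrite e.
by rewrite -mulr_suml sum_alt nodd mul1r.
Qed.
Lemma inR_zero (Z : C) (m : int) : is_zero_obj Z -> inR N [:: (m, Z)].
Proof.
move=> hz; apply: (Qfeq RC _ (Qscale RC m inR_Z0)) => B.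
rewrite fcoef_scale !fcoef1 (ind_isoL _ (zero_iso Z0P hz)) mul1r //.
Qed.

Lemma inR_bp (A B D : C) i1 i2 p1 p2 : @biprod C A B D i1 i2 p1 p2 ->
  inR N [:: (1, D); (-1, A); (-1, B)].
Proof.
move=> hb.
have hL : (1 < L)%N by lia.
pose W := dsum (pseq 0 A) (pseq 1 B).
have hW : inR N (chi W) := inR_chi (dsum_N (pseq_N A (ltnW hL)) (pseq_N B hL)).
have en : iota 0 n = [:: 0; 1; 2] ++ iota 3 (n - 3)%N.
  have e : n = (3 + (n - 3))%N by lia.
  by rewrite {1}e iotaD.
have hrest : inR N [seq ((-1) ^+ i, ob W i) | i <- iota 3 (n - 3)%N].
  apply: (Qsum_in RC (s := iota 3 (n - 3)%N) (f := fun i => [:: ((-1) ^+ i, ob W i)])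
     (Pr := fun i => (3 <= i)%N)).
  - move=> i hi; apply: inR_zero; apply: (bp_zeros (dH _ _ i)); apply: pseq_zero; lia.
  - by apply: foldr_iota => i; lia.
  - by move=> B0; rewrite fcoefE big_map; apply: eq_bigr => i _; rewrite fcoef1.
have e0 : isomorphic (ob W 0) A.
  change (isomorphic (bo (ob (pseq 0 A) 0) (ob (pseq 1 B) 0)) A).
  rewrite pseq_k; apply: bo_zr; apply: pseq_zero; lia.
have e1 : isomorphic (ob W 1) D.
  change (isomorphic (bo (ob (pseq 0 A) 1) (ob (pseq 1 B) 1)) D).
  rewrite pseq_k pseq_k1; apply: isoS; exact: bo_of hb.
have e2 : isomorphic (ob W 2) B.
  change (isomorphic (bo (ob (pseq 0 A) 2) (ob (pseq 1 B) 2)) B).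
  rewrite pseq_k1; apply: bo_zl; apply: pseq_zero; lia.
apply: (Qfeq RC _ (Qneg RC (Qsub RC hW hrest))) => B0.
rewrite fcoef_neg fcoef_cat fcoef_neg fcoef_chi en big_cat_int.
rewrite fcoefE big_map.
rewrite !big_cons big_nil !fcoef_cons fcoef_nil /=.
rewrite (ind_isoL _ e0) (ind_isoL _ e1) (ind_isoL _ e2).
rewrite addrK; ring.
Qed.

Lemma Spl_inR x : Spl x -> inR N x.
Proof.
move=> h; apply: (Gen_min RC _ h) => z [A [B [D [i1 [i2 [p1 [p2 [hb ->]]]]]]]]; exact: inR_bp hb.
Qed.


Definition robj (A : C) (i : nat) : C := if (i < L)%N then (if i == 0%N then A else Z0) else S A.
Definition rseq (A : C) : nsigseq S n :=
  {| ob := robj A;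
     mor := fun i => 0;
     lst := match (L < L)%N as b return Hom (if b then (if L == 0%N then A else Z0) else S A) (S A) with
            | true => 0 | false => - idm (S A) end |}.

Lemma LL_elim (A : C) (T : bool -> Type) (F : forall b : bool, T b -> Prop) (g : forall b, T b) :
  F false (g false) -> F (L < L)%N (g (L < L)%N).
Proof. by rewrite ltnn. Qed.

Lemma rseq_rot A : is_rot (pseq 0 A) (rseq A).
Proof.
pose psi := fun i => match i return Hom (ob (rseq A) i) (ob (pseq 0 A) i.+1) with
                     | 0 => idm A | _.+1 => 0 end.
pose psiL := match (L < L)%N as b return Hom (if b then (if L == 0%N then A else Z0) else S A) (S A) with
            | true => 0 | false => idm (S A) end.
exists psi, psiL; split.
- case=> [_|i hi]; first exact: iso_id.
  apply: zero_iso_any.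
    by rewrite /= /robj hi; apply: Z0P.
  by apply: pseq_zero.
- apply: (@LL_elim A _ (fun b (h : Hom (if b then (if L == 0%N then A else Z0) else S A) (S A)) => is_iso h)
          (fun b => match b as b0 return Hom (if b0 then (if L == 0%N then A else Z0) else S A) (S A) with
            | true => 0 | false => idm (S A) end)).
  exact: iso_id.
- move=> i hi /=. apply: (zeroE Z0P).
- by rewrite /= comp0r comp0l.
- rewrite nodd /= shm1.
  pose g1 := fun b => match b as b0 return Hom (if b0 then (if L == 0%N then A else Z0) else S A) (S A) with
            | true => 0 | false => - idm (S A) end.
  pose g2 := fun b => match b as b0 return Hom (if b0 then (if L == 0%N then A else Z0) else S A) (S A) with
            | true => 0 | false => idm (S A) end.
  apply: (@LL_elim A _ (fun b (h : Hom (if b then (if L == 0%N then A else Z0) else S A) (S A) * Hom (if b then (if L == 0%N then A else Z0) else S A) (S A)) => idm (S A) \oc h.1 = (- idm (S A)) \oc h.2)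
     (fun b => (g1 b, g2 b))) => /=.
  by rewrite compNl !comp1l.
Qed.

Lemma rseq_N A : N (rseq A).
Proof. by apply/(N_rot (rseq_rot A)); apply: pseq0_N. Qed.

Lemma inR_shift A : inR N [:: (1, A); (1, S A)].
Proof.
have h := inR_chi (rseq_N A).
have en : iota 0 n = [:: 0%N] ++ iota 1 (n - 2)%N ++ [:: L].
  have e : n = (1 + ((n - 2) + 1))%N by lia.
  rewrite {1}e !iotaD /=; congr (_ :: _ ++ [:: _]); lia.
have hrest : inR N [seq ((-1) ^+ i, ob (rseq A) i) | i <- iota 1 (n - 2)%N].
  apply: (Qsum_in RC (s := iota 1 (n - 2)%N) (f := fun i => [:: ((-1) ^+ i, ob (rseq A) i)])
     (Pr := fun i => (1 <= i < L)%N)).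
  - move=> i /andP [h1 h2]; apply: inR_zero; rewrite /= /robj h2.
    by case: eqP => [e|_]; [lia | exact: Z0P].
  - by apply: foldr_iota => i; lia.
  - by move=> B0; rewrite fcoefE big_map; apply: eq_bigr => i _; rewrite fcoef1.
have eL : ob (rseq A) L = S A by rewrite /= /robj ltnn.
apply: (Qfeq RC _ (Qsub RC h hrest)) => B0.
rewrite fcoef_cat fcoef_neg fcoef_chi en !big_cat_int fcoefE big_map.
rewrite !big_cons !big_nil !fcoef_cons fcoef_nil eL /=.
have hL : ~~ odd L by move: nodd n3; case: (n) => [|[|m]] //= h _; rewrite negbK.
have -> : ((-1) ^+ L = 1 :> int) by rewrite -signr_odd (negbTE hL) expr0.
have -> : robj A 0 = A by [].
set s0 := \sum_(i <- iota 1 (n - 2)) _; ring.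
Qed.


Lemma k0_bo (A B : C) : k0eq N [:: (1, A); (1, B)] [:: (1, bo A B)].
Proof.
apply: (Qfeq RC _ (Qneg RC (inR_bp (boH A B)))) => B0.
rewrite fcoef_neg fcoef_cat fcoef_neg !fcoef_cons fcoef_nil /=; ring.
Qed.

Lemma rz_k0 l : k0eq N (ms l) [:: (1, rz l)].
Proof.
elim: l => [|a l IH] /=.
  apply: (Qfeq RC _ (Qneg RC inR_Z0)) => B0.
  by rewrite fcoef_cat /= fcoef_nil add0r.
have h := Qsub RC IH (inR_bp (boH a (rz l))).
apply: (Qfeq RC _ h) => B0.
rewrite !fcoef_cat !fcoef_neg !fcoef_cons !fcoef_nil /=; ring.
Qed.

Lemma sum_nseq (F : C -> int) k a : \sum_(i <- nseq k a) F i = k%:Z * F a.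
Proof.
elim: k => [|k IH]; first by rewrite big_nil mul0r.
by rewrite /= big_cons IH -addn1 PoszD mulrDl mul1r addrC.
Qed.

Lemma every_class x : exists A, k0eq N x [:: (1, A)].
Proof.
elim: x => [|[m a] x [A IH]].
  exists Z0; apply: (Qfeq RC _ (Qneg RC inR_Z0)) => B0.
  by rewrite fcoef_cat /= fcoef_nil add0r.
have [l hl] : exists l, k0eq N [:: (m, a)] (ms l).
  case: m => k.
    exists (nseq k a); apply: k0_feq => B0.
    by rewrite fcoef1 fcoef_ms sum_nseq.
  exists (nseq k.+1 (S a)).
  have h := Qneg RC (Qscale RC k.+1 (inR_shift a)).
  apply: (Qfeq RC _ h) => B0.
  rewrite fcoef_neg fcoef_scale fcoef_cat fcoef_neg fcoef_ms sum_nseq !fcoef_cons fcoef_nil /=.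
  rewrite NegzE; ring.
exists (bo (rz l) A).
have e : feq ((m, a) :: x) ([:: (m, a)] ++ x) by [].
apply: k0_trans (k0_feq e) _.
apply: k0_trans (k0_cat (k0_trans hl (rz_k0 l)) IH) _.
exact: k0_bo.
Qed.


Variable T : TensorData S.
Hypothesis HT : tensor_nang T N.
Local Notation "A ** B" := (tobj T A B) (at level 30).

Lemma thom1 (A B : C) : thom T (idm A) (idm B) = idm (A ** B).
Proof. by case: HT => [[h _]] _ _ _ _; apply: h. Qed.
Lemma thomM (A B D A' B' D' : C) (g : Hom B D) (f : Hom A B) (g' : Hom B' D') (f' : Hom A' B') :
  thom T (g \oc f) (g' \oc f') = thom T g g' \oc thom T f f'.
Proof. by case: HT => [[_ [h _]]] _ _ _ _; apply: h. Qed.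
Lemma tensN_l (A : C) X : N X -> N (tens_l T A X).
Proof. by case: HT => _ _ _ [h _] _ hX; case: (h A X hX). Qed.
Lemma tsym_iso (A B : C) : is_iso (tsym T A B).
Proof. by case: HT => _ [_ [_ [_ [h _]]]] _ _ _; apply: h. Qed.
Lemma tru_iso (A : C) : is_iso (tru T A).
Proof. by case: HT => _ [_ [_ [h _]]] _ _ _; apply: h. Qed.

Lemma thom_iso (A A' B B' : C) : isomorphic A A' -> isomorphic B B' -> isomorphic (A ** B) (A' ** B').
Proof.
move=> [f [f' [e1 e2]]] [g [g' [e3 e4]]].
exists (thom T f g), (thom T f' g'); split; by rewrite -thomM ?e1 ?e2 ?e3 ?e4 thom1.
Qed.
Lemma tens_comm (A B : C) : isomorphic (A ** B) (B ** A).
Proof. exists (tsym T A B); exact: tsym_iso. Qed.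
Lemma tens_unit (A : C) : isomorphic (A ** tunit T) A.
Proof. exists (tru T A); exact: tru_iso. Qed.

Lemma fcoef_filter (x : Formal C) (A B : C) :
  fcoef [seq q <- x | ~~ `[< isomorphic q.2 A >]] B = if `[< isomorphic B A >] then 0 else fcoef x B.
Proof.
rewrite /fcoef big_filter.
case: (asboolP (isomorphic B A)) => hBA.
  rewrite big1 // => q hq; case: asboolP => // h; case/asboolP: hq; exact: isoT h hBA.
rewrite [in RHS](bigID (fun q : int * C => ~~ `[< isomorphic q.2 A >])) /= [X in _ = _ + X]big1 ?addr0 // => q.
rewrite negbK => /asboolP hq; case: asboolP => // h; case: hBA; exact: isoT (isoS h) hq.
Qed.

Lemma SI (f : C -> int) : (forall A A', isomorphic A A' -> f A = f A') ->
  forall x y, feq x y -> \sum_(q <- x) q.1 * f q.2 = \sum_(q <- y) q.1 * f q.2.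
Proof.
move=> hf x y; have [k] := ubnP (size x + size y); elim: k x y => // k IH x y hk e.
have [A hA] : exists A, (size [seq q <- x | ~~ `[< isomorphic q.2 A >]] + size [seq q <- y | ~~ `[< isomorphic q.2 A >]] < size x + size y)%N \/ (x = [::] /\ y = [::]).
  have hr : forall (A : C) (z : Formal C), (size [seq q <- z | ~~ `[< isomorphic q.2 A >]] <= size z)%N.
    by move=> A z; rewrite size_filter count_size.
  have hs : forall (p : int * C) (z : Formal C), (size [seq q <- p :: z | ~~ `[< isomorphic q.2 p.2 >]] < size (p :: z))%N.
    move=> p z; rewrite /= ifN; last by apply/negPn/asboolP; exact: isoR.
    by rewrite ltnS hr.
  case: x {hk e} => [|p x]; case: y => [|p' y]; try by exists Z0; right.
  - by exists p'.2; left; exact: (hs p' y).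
  - exists p.2; left; have h := hs p x.
    by rewrite (_ : size [seq q <- ([::] : Formal C) | _] = 0%N) // !addn0.
  - by exists p.2; left; rewrite -addSn; apply: leq_add; [exact: hs | exact: hr].
case: hA => [hlt|[-> ->]] //.
pose isA := fun q : int * C => `[< isomorphic q.2 A >].
rewrite (bigID isA) [in RHS](bigID isA) /=.
have eA : forall z : Formal C, \sum_(q <- z | isA q) q.1 * f q.2 = f A * fcoef z A.
  move=> z; rewrite /fcoef mulr_sumr big_mkcond /=; apply: eq_bigr => q _.
  by rewrite /isA; case: asboolP => h; rewrite ?mulr0 // (hf _ _ h) mulrC.
rewrite !eA e; congr (_ + _).
rewrite -[LHS](big_filter x) -[RHS](big_filter y); apply: IH; first by apply: leq_trans hlt _; rewrite -ltnS.
by move=> B; rewrite !fcoef_filter e.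
Qed.


Lemma fcoef_fmul (r x : Formal C) B :
  fcoef (fmul T r x) B = \sum_(p <- r) \sum_(q <- x) (p.1 * q.1) * ind (p.2 ** q.2) B.
Proof. by rewrite fcoefE /fmul big_allpairs_dep. Qed.

Lemma fmul_feq_r r x y : feq x y -> feq (fmul T r x) (fmul T r y).
Proof.
move=> e B; rewrite !fcoef_fmul; apply: eq_bigr => p _.
under eq_bigr do rewrite -mulrA. under [RHS]eq_bigr do rewrite -mulrA.
rewrite -!mulr_sumr; congr (_ * _).
apply: (SI (f := fun Q => ind (p.2 ** Q) B)) => // A A' h.
by apply: ind_isoL; apply: thom_iso => //; apply: isoR.
Qed.
Lemma fmul_cat_r r x y : feq (fmul T r (x ++ y)) (fmul T r x ++ fmul T r y).
Proof.
move=> B; rewrite fcoef_cat !fcoef_fmul -big_split; apply: eq_bigr => p _.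
by rewrite big_cat.
Qed.
Lemma fmul_neg_r r x : feq (fmul T r (fneg x)) (fneg (fmul T r x)).
Proof.
move=> B; rewrite fcoef_neg !fcoef_fmul -sumrN; apply: eq_bigr => p _.
rewrite big_map -sumrN; apply: eq_bigr => q _ /=; by rewrite mulrN mulNr.
Qed.
Lemma fmul_nil_r r : feq (fmul T r [::]) [::].
Proof. move=> B; rewrite fcoef_fmul fcoef_nil big1 // => p _; exact: big_nil. Qed.
Lemma fmul_comm x y : feq (fmul T x y) (fmul T y x).
Proof.
move=> B; rewrite !fcoef_fmul exchange_big; apply: eq_bigr => q _; apply: eq_bigr => p _.
by congr (_ * _); [exact: mulrC | exact: ind_isoL (tens_comm _ _)].
Qed.

Lemma inR_fmul r z : inR N z -> inR N (fmul T r z).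
Proof.
elim=> {z} [X hX|Z hn _||x y _ hx _ hy|x _ hx|x y e _ hx].
- apply: (Qsum RC (s := r) (f := fun p => scale p.1 (chi (tens_l T p.2 X)))).
    by move=> p; apply: (Qscale RC); apply: inR_chi; apply: tensN_l.
  move=> B; rewrite fcoef_fmul; apply: eq_bigr => p _.
  rewrite fcoef_scale fcoef_chi /chi big_map mulr_sumr; apply: eq_bigr => i _ /=.
  by rewrite mulrA.
- by rewrite nodd in hn.
- exact: (Qfeq' RC (fmul_nil_r r) (Qnil RC)).
- exact: (Qfeq' RC (fmul_cat_r r x y) (Qcat RC hx hy)).
- exact: (Qfeq' RC (fmul_neg_r r x) (Qneg RC hx)).
- exact: (Qfeq RC (fmul_feq_r r e) hx).
Qed.

Lemma k0_fmul x x' y y' : k0eq N x x' -> k0eq N y y' -> k0eq N (fmul T x y) (fmul T x' y').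
Proof.
move=> hx hy.
have h1 : k0eq N (fmul T x y) (fmul T x y').
  apply: (Qfeq RC _ (inR_fmul x hy)) => B.
  by rewrite fmul_cat_r !fcoef_cat fmul_neg_r.
have h2 : k0eq N (fmul T y' x) (fmul T y' x').
  apply: (Qfeq RC _ (inR_fmul y' hx)) => B.
  by rewrite fmul_cat_r !fcoef_cat fmul_neg_r.
apply: k0_trans h1 _; apply: k0_trans (k0_feq (fmul_comm _ _)) _.
apply: k0_trans h2 _; exact: k0_feq (fmul_comm _ _).
Qed.


Definition allP (Pr : C -> Prop) (l : seq C) := foldr (fun a acc => Pr a /\ acc) True l.
Definition allP2 (Pr : C -> Prop) (z : Formal C) := foldr (fun p acc => Pr p.2 /\ acc) True z.

Lemma allP_cat Pr l1 l2 : allP Pr l1 -> allP Pr l2 -> allP Pr (l1 ++ l2).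
Proof. exact: foldr_and_cat. Qed.
Lemma allP_nseq Pr k a : Pr a -> allP Pr (nseq k a).
Proof. by move=> h; elim: k. Qed.

Lemma rz_catl m1 m2 l : isomorphic (rz m1) (rz m2) -> isomorphic (rz (m1 ++ l)) (rz (m2 ++ l)).
Proof.
move=> h; apply: isoT (rz_cat _ _) _; apply: isoT _ (isoS (rz_cat _ _)).
exact: bo_cong h (isoR _).
Qed.
Lemma rz_catr l m1 m2 : isomorphic (rz m1) (rz m2) -> isomorphic (rz (l ++ m1)) (rz (l ++ m2)).
Proof.
move=> h; apply: isoT (rz_cat _ _) _; apply: isoT _ (isoS (rz_cat _ _)).
exact: bo_cong (isoR _) h.
Qed.
Lemma rz_Z0 l : isomorphic (rz (l ++ [:: Z0])) (rz l).
Proof.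
rewrite -{2}(cats0 l); apply: rz_catr; apply: isoT (rz1 _) _; exact: isoR.
Qed.

Lemma expand (z : Formal C) : exists lp ln,
  (forall B, fcoef z B = fcoef (ms lp) B - fcoef (ms ln) B) /\
  (forall Pr, allP2 Pr z -> allP Pr lp /\ allP Pr ln).
Proof.
elim: z => [|[m a] z [lp [ln [e hP]]]].
  by exists [::], [::]; split=> // B; rewrite !fcoef_nil subr0.
case: m => k.
  exists (nseq k a ++ lp), ln; split.
    by move=> B; rewrite fcoef_cons e ms_cat [fcoef (ms (nseq _ _)) _]fcoef_ms sum_nseq /=; ring.
  by move=> Pr [ha hz]; have [h1 h2] := hP Pr hz; split=> //; apply: allP_cat => //; apply: allP_nseq.
exists lp, (nseq k.+1 a ++ ln); split.
  by move=> B; rewrite fcoef_cons e ms_cat [fcoef (ms (nseq _ _)) _]fcoef_ms sum_nseq /= NegzE; ring.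
by move=> Pr [ha hz]; have [h1 h2] := hP Pr hz; split=> //; apply: allP_cat => //; apply: allP_nseq.
Qed.


Section KeyCancel.
Variable P : C -> Prop.
Hypothesis Piso : forall A B, isomorphic A B -> P A -> P B.
Hypothesis PZ0 : P Z0.
Hypothesis Pbo : forall A B, P A -> P B -> P (bo A B).
Hypothesis Pcancel : forall A B, P (bo A B) -> P B -> P A.
Hypothesis Pdense : forall B, exists Y, P (bo B Y).
Hypothesis Pcompl : complete N P.

Lemma rz_P l : allP P l -> P (rz l).
Proof. by elim: l => [|a l IH] //= [ha hl]; apply: Pbo => //; apply: IH. Qed.

Definition Qinv (z : Formal C) : Prop :=
  forall lp ln, (forall B, fcoef z B = fcoef (ms lp) B - fcoef (ms ln) B) ->
  exists c1 c2, [/\ P c1, P c2 & isomorphic (rz (lp ++ [:: c1])) (rz (ln ++ [:: c2]))].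

Lemma perm_ms l l' : (forall B, fcoef (ms l) B = fcoef (ms l') B) -> isomorphic (rz l) (rz l').
Proof. exact: rz_perm. Qed.

Lemma Qinv_closed : closedF Qinv.
Proof.
split.
- move=> lp ln e; exists Z0, Z0; split => //; apply: perm_ms => B.
  by rewrite !ms_cat; move: (e B); rewrite fcoef_nil => /eqP; rewrite eq_sym subr_eq0 => /eqP ->.
- move=> x y hx hy lp ln e.
  have [lpx [lnx [ex _]]] := expand x; have [lpy [lny [ey _]]] := expand y.
  have [c1x [c2x [h1x h2x isx]]] := hx _ _ ex.
  have [c1y [c2y [h1y h2y isy]]] := hy _ _ ey.
  have [W hW] := Pdense (rz (lnx ++ lny)).
  have Pc : forall a b, P a -> P b -> P (rz ((lnx ++ lny) ++ [:: W; a; b])).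
    move=> a b ha hb; rewrite -cat1s catA; apply: Piso (isoS (rz_cat _ _)) _.
    apply: Pbo; last by apply: rz_P.
    apply: Piso (isoS (rz_cat _ _)) _; apply: Piso (bo_cong (isoR _) (isoS (rz1 W))) hW.
  exists (rz ((lnx ++ lny) ++ [:: W; c1x; c1y])), (rz ((lnx ++ lny) ++ [:: W; c2x; c2y])).
  split; [exact: Pc | exact: Pc|].
  apply: isoT (rz_catr _ (rz1 _)) _.
  apply: isoT _ (rz_catr _ (isoS (rz1 _))).
  have e1 : forall B, fcoef (ms (lp ++ (lnx ++ lny) ++ [:: W; c1x; c1y])) B =
     fcoef (ms ((lpx ++ [:: c1x]) ++ (lpy ++ [:: c1y]) ++ ln ++ [:: W])) B.
    move=> B; move: (e B); rewrite fcoef_cat ex ey; rewrite !ms_cat !ms_cons ms_nil.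
    lia.
  apply: isoT (perm_ms e1) _.
  apply: isoT (rz_catl _ isx) _.
  have e2 : forall B, fcoef (ms ((lnx ++ [:: c2x]) ++ (lpy ++ [:: c1y]) ++ ln ++ [:: W])) B =
     fcoef (ms ((lpy ++ [:: c1y]) ++ (lnx ++ [:: c2x]) ++ ln ++ [:: W])) B.
    by move=> B; rewrite !ms_cat; ring.
  apply: isoT (perm_ms e2) _.
  apply: isoT (rz_catl _ isy) _.
  apply: perm_ms => B; rewrite !ms_cat !ms_cons ms_nil; ring.
- move=> x hx lp ln e.
  have [c1 [c2 [h1 h2 hiso]]] := hx ln lp (fun B => etrans (esym (opprK _)) (etrans (congr1 -%R (etrans (esym (fcoef_neg x B)) (e B))) (opprB _ _))).
  by exists c2, c1; split => //; apply: isoS.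
- by move=> x y e hx lp ln e'; apply: hx => B; rewrite e.
Qed.

Definition zgen (z : Formal C) : Prop := spg z \/ exists A, P A /\ z = [:: (1, A)].
Definition zG := Gen zgen.

Lemma zgen_Qinv z : zgen z -> Qinv z.
Proof.
case=> [[A [B [D [i1 [i2 [p1 [p2 [hb ->]]]]]]]]|[A [hA ->]]] lp ln e.
  have [W hW] := Pdense (bo A B).
  have hc : P (rz [:: A; B; W]).
    apply: Piso (isoS (rz_cat [:: A; B] [:: W])) _.
    apply: Piso (bo_cong (isoS (bo_cong (isoR _) (rz1 _))) (isoS (rz1 W))) hW.
  exists (rz [:: A; B; W]), (rz [:: A; B; W]); split => //.
  apply: isoT (rz_catr _ (rz1 _)) _.
  apply: isoT _ (rz_catr _ (isoS (rz1 _))).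
  have e1 : forall B0, fcoef (ms (lp ++ [:: A; B; W])) B0 = fcoef (ms (ln ++ [:: D; W])) B0.
    move=> B0; move: (e B0); rewrite !fcoef_cons fcoef_nil !ms_cat !ms_cons ms_nil /=.
    lia.
  apply: isoT (perm_ms e1) _.
  apply: rz_catr => /=.
  apply: isoT _ (isoS (bo_assoc _ _ _)).
  apply: bo_cong (isoR _); exact: bo_of hb.
exists Z0, A; split => //.
apply: isoT (rz_Z0 _) _; apply: perm_ms => B0.
by move: (e B0); rewrite ms_cat !ms_cons !ms_nil ?fcoef1; lia.
Qed.

Lemma zG_Qinv z : zG z -> Qinv z.
Proof. move=> h; exact: (Gen_min Qinv_closed zgen_Qinv h). Qed.


Lemma zG_closed : closedF zG. Proof. exact: Gen_closed. Qed.
Lemma Spl_zG x : Spl x -> zG x.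
Proof. move=> h; apply: (Gen_min zG_closed _ h) => z hz; apply: gen_g; by left. Qed.
Lemma zG_P (A : C) (m : int) : P A -> zG [:: (m, A)].
Proof.
move=> hA; apply: (Qfeq zG_closed _ (Qscale zG_closed m (gen_g (or_intror (ex_intro _ A (conj hA erefl)))))).
by move=> B; rewrite fcoef_scale !fcoef1 /=; ring.
Qed.

Lemma chi_zG X : N X -> zG (chi X).
Proof.
move=> hX.
have [X' [phi [hX' hS _ _ hP]]] := chain Piso Pdense (j := 0) (k := L) hX (leqnn _).
have hPL : P (ob X' L).
  apply: (Pcompl hX') => // i hi hne; apply: hP; lia.
have hX'z : zG (chi X').
  apply: (Qsum_in zG_closed (s := iota 0 n) (f := fun i => [:: ((-1) ^+ i, ob X' i)])
    (Pr := fun i => P (ob X' i))).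
  - by move=> i hi; apply: zG_P.
  - apply: foldr_iota => i hi; case: (ltnP i L) => h; first by apply: hP; lia.
    by have -> : i = L by lia.
  - by move=> B; rewrite fcoefE big_map; apply: eq_bigr => i _; rewrite fcoef1.
apply: (Qfeq zG_closed _ (Qsub zG_closed hX'z (Spl_zG hS))) => B.
rewrite !(fcoef_cat, fcoef_neg); ring.
Qed.

Lemma inR_zG z : inR N z -> zG z.
Proof.
elim=> {z} [X hX|Z hn _||x y _ hx _ hy|x _ hx|x y e _ hx].
- exact: chi_zG.
- by rewrite nodd in hn.
- exact: (Qnil zG_closed).
- exact: (Qcat zG_closed hx hy).
- exact: (Qneg zG_closed hx).
- exact: (Qfeq zG_closed e hx).
Qed.

Lemma key_cancel A z : allP2 P z -> k0eq N [:: (1, A)] z -> P A.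
Proof.
move=> hz /inR_zG /zG_Qinv hq.
have [lpz [lnz [ez hPz]]] := expand z; have [hp hn] := hPz P hz.
have e : forall B, fcoef ([:: (1, A)] ++ fneg z) B = fcoef (ms (A :: lnz)) B - fcoef (ms lpz) B.
  by move=> B; rewrite fcoef_cat fcoef_neg ez ms_cons fcoef1 mul1r; ring.
have [c1 [c2 [h1 h2 hi]]] := hq _ _ e.
apply: (Pcancel (B := rz (lnz ++ [:: c1]))); last by apply: rz_P; apply: allP_cat.
by apply: Piso (isoS hi) _; apply: rz_P; apply: allP_cat.
Qed.
End KeyCancel.


Lemma Pcancel_of (P : C -> Prop) : (forall A B, isomorphic A B -> P A -> P B) -> P Z0 ->
  complete N P -> forall A B, P (bo A B) -> P B -> P A.
Proof.
move=> Piso PZ0 Pc A B hAB hB.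
have hL : (1 < L)%N by lia.
pose W := dsum (pseq 0 A) (pseq 1 B).
have hW : N W := dsum_N (pseq_N A (ltnW hL)) (pseq_N B hL).
have Pz : forall Z, is_zero_obj Z -> P Z by move=> Z hz; apply: Piso PZ0; apply: zero_iso Z0P hz.
have h0 : P (ob W 0).
  apply: (Pc _ hW) => // i hi hne.
  case: (ltnP 2 i) => h3.
    apply: Pz; apply: (bp_zeros (dH _ _ i)); apply: pseq_zero; lia.
  change (P (bo (ob (pseq 0 A) i) (ob (pseq 1 B) i))).
  have [-> | ->] : i = 1%N \/ i = 2 by lia.
    by rewrite pseq_k pseq_k1.
  rewrite pseq_k1; apply: Piso hB; apply: isoS; apply: bo_zl; apply: pseq_zero; lia.
apply: Piso h0; change (isomorphic (bo (ob (pseq 0 A) 0) (ob (pseq 1 B) 0)) A).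
rewrite pseq_k; apply: bo_zr; apply: pseq_zero; lia.
Qed.

Lemma allP2_cat Pr x y : allP2 Pr x -> allP2 Pr y -> allP2 Pr (x ++ y).
Proof. exact: foldr_and_cat. Qed.
Lemma allP2_neg Pr x : allP2 Pr x -> allP2 Pr (fneg x).
Proof. by elim: x => [|p x IH] //= [h1 h2]; split => //; apply: IH. Qed.
Lemma allP2_fmul Pr r x : (forall A B, Pr A -> Pr (B ** A)) -> allP2 Pr x -> allP2 Pr (fmul T r x).
Proof.
move=> hI hx; rewrite /fmul; elim: r => [|p r IH] //=.
apply: allP2_cat => //; elim: x hx {IH} => [|q x IH] //= [h1 h2]; split; [exact: hI | exact: IH].
Qed.

Lemma partA1 (P : C -> Prop) : cd_tensor_ideal N T P ->
  K0_ideal N T (ImK0 N P) /\ (forall A : C, AH (ImK0 N P) A <-> P A).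
Proof.
case=> NA [[Piso [[Z [hZ PZ]] Pbo0] _ _ _] Pten Pc Pd].
have PZ0 : P Z0 by apply: Piso PZ; apply: zero_iso hZ Z0P.
have Pbo : forall A B, P A -> P B -> P (bo A B).
  move=> A B hA hB; have [D [i1 [i2 [p1 [p2 [hb hD]]]]]] := Pbo0 A B hA hB.
  apply: Piso hD; exact: bo_of hb.
have Pdense : forall B, exists Y, P (bo B Y).
  move=> B; have [A [B' [i1 [i2 [p1 [p2 [hA hb]]]]]]] := Pd B.
  exists B'; apply: Piso hA; exact: bo_of hb.
have Pcancel := Pcancel_of Piso PZ0 Pc.
split.
  split.
  - move=> x y hxy [z [hz e]]; exists z; split => //; apply: k0_trans e; exact: k0_sym.
  - by exists [::]; split => //; apply: k0_refl.
  - move=> x y [z1 [h1 e1]] [z2 [h2 e2]]; exists (z1 ++ z2); split.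
      exact: allP2_cat.
    exact: k0_cat.
  - move=> x [z [h e]]; exists (fneg z); split; [exact: allP2_neg | exact: k0_neg].
  - move=> r x [z [h e]]; exists (fmul T r z); split; first exact: allP2_fmul.
    exact: k0_fmul (k0_refl r) e.
move=> A; split.
  move=> [z [hz e]]; exact: (key_cancel Piso PZ0 Pbo Pcancel Pdense Pc hz e).
by move=> hA; exists [:: (1, A)]; split => //; apply: k0_refl.
Qed.

Lemma fmul11 (A B : C) : feq (fmul T [:: (1, A)] [:: (1, B)]) [:: (1, A ** B)].
Proof. by move=> B0; rewrite fcoef_fmul !big_cons !big_nil. Qed.

Lemma partB1 (P : C -> Prop) : cd_tensor_ideal N T P -> tensor_prime T P -> proper_subcat P ->
  K0_prime N T (ImK0 N P) /\ (forall A : C, AH (ImK0 N P) A <-> P A).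
Proof.
move=> hP hpr [A0 hA0].
have [hI hA] := partA1 hP.
case: hP => NA [[Piso _ _ _ _] Pten _ _].
have hsat : forall x y, k0eq N x y -> ImK0 N P x -> ImK0 N P y by case: hI.
split => //; split => //.
  move/(hA (tunit T)) => hu; apply: hA0; apply: Piso (Pten _ A0 hu); exact: tens_unit.
move=> x y hxy.
have [A eA] := every_class x; have [B eB] := every_class y.
have : ImK0 N P (fmul T [:: (1, A)] [:: (1, B)]) by apply: hsat hxy; exact: k0_fmul eA eB.
move/(hsat _ _ (k0_feq (fmul11 A B)))/(hA (A ** B)) => /hpr [hPA|hPB].
  by left; apply: hsat (k0_sym eA) _; apply/hA.
by right; apply: hsat (k0_sym eB) _; apply/hA.
Qed.

Section IdealH.
Variable H : Formal C -> Prop.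
Hypothesis HH : K0_ideal N T H.
Local Notation PH := (AH H).

Lemma Hsat x y : k0eq N x y -> H x -> H y. Proof. by case: HH => h _ _ _ _; apply: h. Qed.
Lemma H_closed : closedF H.
Proof.
case: HH => h1 h2 h3 h4 _; split => // x y e hx.
apply: h1 hx; exact: k0_feq.
Qed.
Lemma PH_m A m : PH A -> H [:: (m, A)].
Proof.
move=> h; apply: (Qfeq H_closed _ (Qscale H_closed m h)) => B.
by rewrite fcoef_scale !fcoef1 /=; ring.
Qed.
Lemma PH_iso A B : isomorphic A B -> PH A -> PH B.
Proof. by move=> h; apply: Hsat; apply: k0_feq; apply: feq_iso1. Qed.
Lemma PH_zero Z : is_zero_obj Z -> PH Z.
Proof.
move=> hz; apply: (Hsat _ (Qnil H_closed)).
apply: (Qfeq RC _ (inR_zero (-1) hz)) => B; rewrite fcoef_cat fcoef_neg !fcoef1 fcoef_nil; ring.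
Qed.
Lemma PH_bo A B : PH A -> PH B -> PH (bo A B).
Proof.
move=> hA hB; apply: (Hsat _ (Qcat H_closed hA hB)).
exact: k0_bo.
Qed.
Lemma PH_shift A : PH A <-> PH (S A).
Proof.
have h := inR_shift A.
split => hA.
  apply: (Hsat _ (Qneg H_closed hA)).
  apply: (Qfeq RC _ (Qneg RC h)) => B; rewrite !(fcoef_cat, fcoef_neg, fcoef_cons, fcoef_nil) /=; ring.
apply: (Hsat _ (Qneg H_closed hA)).
apply: (Qfeq RC _ (Qneg RC h)) => B; rewrite !(fcoef_cat, fcoef_neg, fcoef_cons, fcoef_nil) /=; ring.
Qed.
Lemma PH_dense B : PH (bo B (S B)).
Proof.
apply: (Hsat _ (Qnil H_closed)).
apply: k0_trans _ (k0_bo B (S B)).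
apply: (Qfeq RC _ (Qneg RC (inR_shift B))) => B0; rewrite !(fcoef_cat, fcoef_neg, fcoef_cons, fcoef_nil) /=; ring.
Qed.
Lemma PH_ten A B : PH A -> PH (B ** A).
Proof.
move=> hA; case: HH => _ _ _ _ hm.
apply: Hsat (hm [:: (1, B)] _ hA); exact: k0_feq (fmul11 B A).
Qed.

Lemma sign2 (j : nat) : ((-1) ^+ j * (-1) ^+ j = 1 :> int).
Proof. by rewrite -signr_odd; case: (odd j); rewrite /= ?expr0 ?expr1 ?mulr1 ?mulrNN ?mulr1. Qed.

Lemma PH_compl : complete N PH.
Proof.
move=> X hX j hj hP.
have hjn : (j < n)%N by lia.
have en : iota 0 n = iota 0 j ++ j :: iota j.+1 (n - j.+1)%N.
  have e : n = (j + (1 + (n - j.+1)))%N by lia.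
  by rewrite {1}e !iotaD /= add0n addn1.
have hy : H (chi X ++ fneg [:: ((-1) ^+ j, ob X j)]).
  apply: (Qsum_in H_closed (s := iota 0 j ++ iota j.+1 (n - j.+1)%N)
      (f := fun i => [:: ((-1) ^+ i, ob X i)]) (Pr := fun i => PH (ob X i))).
  - by move=> i hi; apply: PH_m.
  - by apply: foldr_and_cat; apply: foldr_iota => i hi; apply: hP; lia.
  - move=> B; rewrite fcoef_cat fcoef_neg fcoef_chi en !big_cat_int big_cons fcoef1.
    under [in RHS]eq_bigr do rewrite fcoef1.
    under [X in _ = _ + X]eq_bigr do rewrite fcoef1.
    ring.
have hj' : H [:: ((-1) ^+ j, ob X j)].
  apply: (Hsat _ (Qneg H_closed hy)).
  apply: (Qfeq RC _ (Qneg RC (inR_chi hX))) => B.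
  rewrite !(fcoef_cat, fcoef_neg); ring.
apply: (Qfeq H_closed _ (Qscale H_closed ((-1) ^+ j) hj')) => B.
by rewrite fcoef_scale !fcoef1 /= mulrA sign2.
Qed.
End IdealH.

Lemma partA2 (H : Formal C -> Prop) : K0_ideal N T H ->
  cd_tensor_ideal_with N T (AH H) (restrN N (AH H))
  /\ (forall x, ImK0 N (AH H) x <-> H x).
Proof.
move=> HH.
have Pdense : forall B, exists Y, AH H (bo B Y).
  by move=> B; exists (S B); apply: PH_dense.
split; last first.
  move=> x; split.
    move=> [z [hz e]]; apply: (Hsat HH (k0_sym e)).
    apply: (Qsum_in (H_closed HH) (s := z) (f := fun q => [:: q]) (Pr := fun q => AH H q.2)) => //.
      by case=> m a /= ha; apply: PH_m.
    by move=> B; rewrite /fcoef; apply: eq_bigr => q _; rewrite /fcoef big_cons big_nil addr0.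
  move=> hx; have [A eA] := every_class x.
  by exists [:: (1, A)]; split => //; split => //; apply: (Hsat HH eA hx).
case: HN => c0 [c1 [c2 [c3 c4]]] [c5 c6] c7 c8.
split.
- split.
  + exact: (PH_iso HH).
  + split; first by exists Z0; split; [exact: Z0P | exact: (PH_zero HH Z0P)].
    move=> A B hA hB; exists (bo A B), (bi1 (bp A B)), (bi2 (bp A B)), (bp1 (bp A B)), (bp2 (bp A B)).
    split; [exact: boH | exact: PH_bo].
  + exact: (PH_shift HH).
  + split.
    * by move=> X [].
    * split; [|split; [|split]].
      - move=> X Y hY [hX _] hs; split => //; exact: c1 (seq_inT _) hX hs.
      - move=> X Y Z hZ [hX _] [hY _] hd; split => //; exact: c2 (seq_inT _) hX hY hd.
      - move=> X Y Z hX hY [hZ _] hd; split => //; exact: c3 (seq_inT _) (seq_inT _) hZ hd.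
      - move=> X hX ht; split => //; exact: c4 (seq_inT _) ht.
    * split.
      - move=> A B f hA hB.
        have [X [hX [u0 [u1 [iu0 iu1 eu]]]]] := c5 A B f I I.
        have hjk : (2 <= L <= L)%N by rewrite leqnn andbT; lia.
        have [X' [phi [hX' _ [hm1 hm2] hiso hP]]] := chain (PH_iso HH) Pdense hX hjk.
        have hlow : forall i, (i < L)%N -> AH H (ob X' i).
          move=> i hi; case: (ltnP i 2) => h2; last by apply: hP; lia.
          have [-> | ->] : i = 0%N \/ i = 1%N by lia.
            apply: (PH_iso HH) hA; exists (phi 0%N \oc u0); apply: iso_comp => //; exact: hiso.
          apply: (PH_iso HH) hB; exists (phi 1%N \oc u1); apply: iso_comp => //; exact: hiso.
        exists X'; split.
          split => // i hi; case: (ltnP i L) => hiL; first exact: hlow.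
          have -> : i = L by lia.
          apply: (PH_compl HH hX') => // k hk hne; apply: hlow; lia.
        exists (phi 0%N \oc u0), (phi 1%N \oc u1); split.
        + by apply: iso_comp => //; apply: hiso.
        + by apply: iso_comp => //; apply: hiso.
        + by rewrite compA hm1 // -compA eu compA.
      - move=> X Y hX hY hr; split => [[h1 _]|[h1 _]]; split => //.
          exact/(c6 X Y (seq_inT _) (seq_inT _) hr).
        exact/(c6 X Y (seq_inT _) (seq_inT _) hr).
    * move=> X Y [hX _] [hY _] f0 f1 e; exact: c7 hX hY f0 f1 e.
    * move=> X Y [hX _] [hY _] f0 f1 e.
      have [phi [h1 h2 h3 h4]] := c8 X Y hX hY f0 f1 e.
      exists phi; split => // Z hZ hc; split => //; exact: h4 (seq_inT _) hc.
  + exists (fun A => idm (S A)); split.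
    * by move=> A _; apply: iso_id.
    * by move=> A B f _ _; rewrite comp1l comp1r.
    * by move=> [ob0 mor0 lst0] [hX _]; rewrite /twist /= comp1l.
- by move=> A B hA; apply: PH_ten.
- exact: PH_compl.
- move=> B; exists (bo B (S B)), (S B), (bi1 (bp B (S B))), (bi2 (bp B (S B))), (bp1 (bp B (S B))), (bp2 (bp B (S B))).
  split; [exact: PH_dense | exact: boH].
Qed.

Lemma partB2 (H : Formal C -> Prop) : K0_prime N T H ->
  (cd_tensor_ideal_with N T (AH H) (restrN N (AH H)) /\ tensor_prime T (AH H) /\ proper_subcat (AH H))
  /\ (forall x, ImK0 N (AH H) x <-> H x).
Proof.
case=> HH hI hpr.
have [h1 h2] := partA2 HH.
split => //; split => //; split; last by exists (tunit T).
move=> A B hAB; apply: hpr; apply: (Hsat HH _ hAB); apply: k0_feq => B0.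
by rewrite fmul11.
Qed.
End Basic.

Unset Implicit Arguments.
Theorem theorem5p2 (n : nat) (C : Cat) (S : Shift C) (N : nsigseq S n -> Prop)
    (T : TensorData S) :
  odd n -> (3 <= n)%N ->
  additive_cat C -> shift_ok S -> nangulation (fun _ => True) N ->
  tensor_nang T N ->
  (* (a) complete dense n-angulated tensor ideals <-> ideals of K_0(C) *)
  ((forall P : C -> Prop, cd_tensor_ideal N T P ->
      K0_ideal N T (ImK0 N P) /\ (forall A : C, AH (ImK0 N P) A <-> P A))
   /\ (forall H, K0_ideal N T H ->
      cd_tensor_ideal_with N T (AH H) (restrN N (AH H))
      /\ (forall x, ImK0 N (AH H) x <-> H x)))
  /\
  (* (b) complete dense n-angulated tensor prime ideals <-> prime ideals *)
  ((forall P : C -> Prop, cd_tensor_ideal N T P -> tensor_prime T P -> proper_subcat P ->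
      K0_prime N T (ImK0 N P) /\ (forall A : C, AH (ImK0 N P) A <-> P A))
   /\ (forall H, K0_prime N T H ->
      (cd_tensor_ideal_with N T (AH H) (restrN N (AH H)) /\ tensor_prime T (AH H) /\ proper_subcat (AH H))
      /\ (forall x, ImK0 N (AH H) x <-> H x))).
Proof.
move=> nodd n3 HC HS HN HT.
split; split.
- by move=> P hP; apply: partA1.
- by move=> H hH; apply: partA2.
- by move=> P hP hpr hpp; apply: partB1.
- by move=> H hH; apply: partB2.
Qed.
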